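(* Every smooth planar stationary magnetic field with an additional symmetry is, up to the symmetries of the Hall-MHD / electron-MHD systems (translations, rotations, reflections), of one of the forms $$\mathring{\mathbf B}=f(y)\partial_x,\qquad \mathring{\mathbf B}=(c_1y+c_0)\partial_x+d\,\partial_y,\qquad \mathring{\mathbf B}=g(x^2+y^2)(x\partial_y-y\partial_x),$$ where $f,g$ are smooth functions and $c_0,c_1,d\in\mathbb R$.
   Context: A planar stationary magnetic field with an additional symmetry is a time-independent vector field $\mathring{\mathbf B}$ on $\mathbb R^3$ (coordinates $(x,y,z)$) such that: $\nabla\cdot\mathring{\mathbf B}=0$ and $(\nabla\times\mathring{\mathbf B})\times\mathring{\mathbf B}$ is a pure gradient (stationarity); $\mathring{\mathbf B}$ is independent of $z$ and $\mathring{\mathbf B}^z=0$ (planarity); and $\mathring{\mathbf B}^x\partial_x+\mathring{\mathbf B}^y\partial_y$, viewed as a vector field on $\mathbb R^2_{x,y}$, is invariant under a one-parameter family of isometries of $\mathbb R^2_{x,y}$. *)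

(* Defs.v *)
From Stdlib Require Import Reals List.
From Coquelicot Require Import Coquelicot.
Open Scope R_scope.

Definition fun3 := R -> R -> R -> R.

Inductive dir3 := DX | DY | DZ.

Definition pd3 (d : dir3) (f : fun3) : fun3 :=
  match d with
  | DX => fun x y z => Derive (fun t => f t y z) x
  | DY => fun x y z => Derive (fun t => f x t z) y
  | DZ => fun x y z => Derive (fun t => f x y t) z
  end.

Definition ex_pd3 (d : dir3) (f : fun3) : Prop :=
  match d with
  | DX => forall x y z, ex_derive (fun t => f t y z) x
  | DY => forall x y z, ex_derive (fun t => f x t z) y
  | DZ => forall x y z, ex_derive (fun t => f x y t) z
  end.

Definition iter_pd3 (l : list dir3) (f : fun3) : fun3 := fold_right pd3 f l.

Definition continuous3 (f : fun3) : Prop :=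
  forall x y z,
    continuous (fun p : R * R * R => f (fst (fst p)) (snd (fst p)) (snd p)) (x, y, z).

Definition smooth3 (f : fun3) : Prop :=
  forall l : list dir3,
    continuous3 (iter_pd3 l f) /\ forall d, ex_pd3 d (iter_pd3 l f).

Definition smooth1 (f : R -> R) : Prop :=
  forall n : nat, forall x, ex_derive (Derive_n f n) x.

Record vfield3 := VF3 { Vx : fun3 ; Vy : fun3 ; Vz : fun3 }.

Definition smooth_vf3 (B : vfield3) : Prop :=
  smooth3 (Vx B) /\ smooth3 (Vy B) /\ smooth3 (Vz B).

Definition divergence (B : vfield3) : fun3 :=
  fun x y z => pd3 DX (Vx B) x y z + pd3 DY (Vy B) x y z + pd3 DZ (Vz B) x y z.

Definition curl (B : vfield3) : vfield3 :=
  VF3 (fun x y z => pd3 DY (Vz B) x y z - pd3 DZ (Vy B) x y z)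
      (fun x y z => pd3 DZ (Vx B) x y z - pd3 DX (Vz B) x y z)
      (fun x y z => pd3 DX (Vy B) x y z - pd3 DY (Vx B) x y z).

Definition cross (A B : vfield3) : vfield3 :=
  VF3 (fun x y z => Vy A x y z * Vz B x y z - Vz A x y z * Vy B x y z)
      (fun x y z => Vz A x y z * Vx B x y z - Vx A x y z * Vz B x y z)
      (fun x y z => Vx A x y z * Vy B x y z - Vy A x y z * Vx B x y z).

Definition is_gradient (F : vfield3) : Prop :=
  exists p : fun3, forall x y z,
    is_derive (fun t => p t y z) x (Vx F x y z) /\
    is_derive (fun t => p x t z) y (Vy F x y z) /\
    is_derive (fun t => p x y t) z (Vz F x y z).

Definition stationary (B : vfield3) : Prop :=
  (forall x y z, divergence B x y z = 0) /\ is_gradient (cross (curl B) B).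

Definition planar (B : vfield3) : Prop :=
  (forall x y z, Vz B x y z = 0) /\
  (forall x y z, Vx B x y z = Vx B x y 0 /\ Vy B x y z = Vy B x y 0).

Definition planar_part (B : vfield3) : R * R -> R * R :=
  fun p => (Vx B (fst p) (snd p) 0, Vy B (fst p) (snd p) 0).

(* An isometry of R^2 is an affine map p |-> Q p + b with Q orthogonal. *)
Record isom2 := mkIsom2 { Q11 : R ; Q12 : R ; Q21 : R ; Q22 : R ; T1 : R ; T2 : R }.

Definition orthogonal2 (g : isom2) : Prop :=
  Q11 g * Q11 g + Q21 g * Q21 g = 1 /\
  Q12 g * Q12 g + Q22 g * Q22 g = 1 /\
  Q11 g * Q12 g + Q21 g * Q22 g = 0.

Definition act (g : isom2) (p : R * R) : R * R :=
  (Q11 g * fst p + Q12 g * snd p + T1 g, Q21 g * fst p + Q22 g * snd p + T2 g).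

Definition lin (g : isom2) (v : R * R) : R * R :=
  (Q11 g * fst v + Q12 g * snd v, Q21 g * fst v + Q22 g * snd v).

Definition pushforward_eq (g : isom2) (V W : R * R -> R * R) : Prop :=
  forall p, W (act g p) = lin g (V p).

Definition invariant_under (g : isom2) (V : R * R -> R * R) : Prop :=
  pushforward_eq g V V.

Definition one_param_group (phi : R -> isom2) : Prop :=
  (forall t, orthogonal2 (phi t)) /\
  (forall p, act (phi 0) p = p) /\
  (forall s t p, act (phi (s + t)) p = act (phi s) (act (phi t) p)) /\
  (forall t, continuity_pt (fun s => Q11 (phi s)) t /\
             continuity_pt (fun s => Q12 (phi s)) t /\
             continuity_pt (fun s => Q21 (phi s)) t /\
             continuity_pt (fun s => Q22 (phi s)) t /\
             continuity_pt (fun s => T1 (phi s)) t /\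
             continuity_pt (fun s => T2 (phi s)) t) /\
  (exists t p, act (phi t) p <> p).

Definition has_additional_symmetry (V : R * R -> R * R) : Prop :=
  exists phi : R -> isom2, one_param_group phi /\ forall t, invariant_under (phi t) V.

Definition form_shear (W : R * R -> R * R) : Prop :=
  exists f : R -> R, smooth1 f /\ forall x y, W (x, y) = (f y, 0).

Definition form_affine (W : R * R -> R * R) : Prop :=
  exists c1 c0 d : R, forall x y, W (x, y) = (c1 * y + c0, d).

Definition form_rotational (W : R * R -> R * R) : Prop :=
  exists g : R -> R, smooth1 g /\
    forall x y, W (x, y) = (- (y * g (x ^ 2 + y ^ 2)), x * g (x ^ 2 + y ^ 2)).

(* Main.v *)
Require Import Defs.
From Stdlib Require Import Reals Lra Lia ZArith FunctionalExtensionality List Classical IndefiniteDescription.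
From Coquelicot Require Import Coquelicot.
Open Scope R_scope.

Definition Dn (n : nat) (f : R -> R) :=
  forall k, (k <= n)%nat -> forall x : R, ex_derive (Derive_n f k) x.

Lemma exd_plus (f g : R -> R) x : ex_derive f x -> ex_derive g x -> ex_derive (fun y => f y + g y) x.
Proof. intros [l1 H1] [l2 H2]. exists (l1+l2). apply (is_derive_plus (K:=R_AbsRing) (V:=R_NormedModule) f g); auto. Qed.

Lemma Derive_n_Derive f n : Derive_n (Derive f) n = Derive_n f (S n).
Proof. induction n; simpl; auto. rewrite IHn; reflexivity. Qed.

Lemma Dn_S n f : Dn (S n) f <-> (forall x : R, ex_derive f x) /\ Dn n (Derive f).
Proof.
  split.
  - intros H. split.
    + intros x. apply (H 0%nat). lia.
    + intros k Hk x. rewrite Derive_n_Derive. apply H. lia.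
  - intros [H1 H2] k Hk x. destruct k as [|k].
    + apply H1.
    + rewrite <- Derive_n_Derive. apply H2. lia.
Qed.

Lemma Dn_0 f : Dn 0 f <-> forall x : R, ex_derive f x.
Proof.
  split.
  - intros H x. apply (H 0%nat). lia.
  - intros H k Hk x. assert (k = 0%nat) by lia. subst. apply H.
Qed.

Lemma Dn_ex n f : Dn n f -> forall x : R, ex_derive f x.
Proof. intros H x. apply (H 0%nat). lia. Qed.

Lemma smooth1_Dn f : smooth1 f <-> forall n, Dn n f.
Proof.
  split.
  - intros H n k _ x. apply H.
  - intros H n x. apply (H n n). lia.
Qed.

Lemma Dn_mono m n f : (m <= n)%nat -> Dn n f -> Dn m f.
Proof. intros Hmn H k Hk x. apply H. lia. Qed.

Lemma Dn_ext n f g : (forall x, f x = g x) -> Dn n f -> Dn n g.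
Proof.
  intros E H. replace g with f; auto. apply functional_extensionality; auto.
Qed.

Lemma smooth1_ext f g : (forall x, f x = g x) -> smooth1 f -> smooth1 g.
Proof.
  intros E H. replace g with f; auto. apply functional_extensionality; auto.
Qed.

Lemma Dn_plus n : forall f g, Dn n f -> Dn n g -> Dn n (fun x => f x + g x).
Proof.
  induction n; intros f g Hf Hg.
  - apply Dn_0. intros x. apply exd_plus; eapply Dn_ex; eauto.
  - apply Dn_S in Hf as [Hf1 Hf2]. apply Dn_S in Hg as [Hg1 Hg2].
    apply Dn_S. split.
    + intros x. apply exd_plus; auto.
    + apply Dn_ext with (fun x => Derive f x + Derive g x).
      * intros x. rewrite Derive_plus; auto.
      * apply IHn; auto.
Qed.

Lemma Dn_scal n : forall c f, Dn n f -> Dn n (fun x => c * f x).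
Proof.
  induction n; intros c f Hf.
  - apply Dn_0. intros x. apply ex_derive_scal; eapply Dn_ex; eauto.
  - apply Dn_S in Hf as [Hf1 Hf2].
    apply Dn_S. split.
    + intros x. apply ex_derive_scal; auto.
    + apply Dn_ext with (fun x => c * Derive f x).
      * intros x. rewrite Derive_scal; auto.
      * apply IHn; auto.
Qed.

Lemma Dn_const n : forall c, Dn n (fun _ => c).
Proof.
  induction n; intros c.
  - apply Dn_0. intros x. apply ex_derive_const.
  - apply Dn_S. split.
    + intros x. apply ex_derive_const.
    + apply Dn_ext with (fun _ => 0).
      * intros x. rewrite Derive_const; auto.
      * apply IHn.
Qed.

Lemma Dn_id n : Dn n (fun x => x).
Proof.
  destruct n.
  - apply Dn_0. intros x. apply ex_derive_id.
  - apply Dn_S. split.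
    + intros x. apply ex_derive_id.
    + apply Dn_ext with (fun _ => 1).
      * intros x. rewrite Derive_id; auto.
      * apply Dn_const.
Qed.

Lemma Dn_mult n : forall f g, Dn n f -> Dn n g -> Dn n (fun x => f x * g x).
Proof.
  induction n; intros f g Hf Hg.
  - apply Dn_0. intros x. apply ex_derive_mult; eapply Dn_ex; eauto.
  - pose proof Hf as Hf'. pose proof Hg as Hg'.
    apply Dn_S in Hf as [Hf1 Hf2]. apply Dn_S in Hg as [Hg1 Hg2].
    apply Dn_S. split.
    + intros x. apply ex_derive_mult; auto.
    + apply Dn_ext with (fun x => Derive f x * g x + f x * Derive g x).
      * intros x. rewrite Derive_mult; auto.
      * apply Dn_plus; apply IHn; auto; apply (Dn_mono n (S n)); auto.
Qed.

Lemma Dn_inv n : forall f, Dn n f -> (forall x, f x <> 0) -> Dn n (fun x => / f x).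
Proof.
  induction n; intros f Hf Hnz.
  - apply Dn_0. intros x. apply ex_derive_inv; auto. eapply Dn_ex; eauto.
  - pose proof Hf as Hf'.
    apply Dn_S in Hf as [Hf1 Hf2].
    apply Dn_S. split.
    + intros x. apply ex_derive_inv; auto.
    + apply Dn_ext with (fun x => (-1) * (Derive f x * (/ f x * / f x))).
      * intros x. rewrite Derive_inv; auto. specialize (Hnz x). field. auto.
      * apply Dn_scal. apply Dn_mult; auto. apply Dn_mult; apply IHn; auto;
        apply (Dn_mono n (S n)); auto.
Qed.

Lemma is_derive_affine a b x : is_derive (fun y => a * y + b) x a.
Proof. auto_derive; auto. ring. Qed.

Lemma Derive_affine a b x : Derive (fun y => a * y + b) x = a.
Proof. apply is_derive_unique. exact (is_derive_affine a b x). Qed.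

Lemma Derive_comp_affine f a b x : ex_derive f (a*x+b) ->
  Derive (fun y => f (a*y+b)) x = a * Derive f (a*x+b).
Proof.
  intros H. apply is_derive_unique.
  pose proof (is_derive_comp f (fun y => a*y+b) x (Derive f (a*x+b)) a
     (Derive_correct _ _ H) (is_derive_affine a b x)) as H0.
  exact H0.
Qed.

Lemma Dn_comp_affine n : forall a b f, Dn n f -> Dn n (fun x => f (a * x + b)).
Proof.
  induction n; intros a b f Hf.
  - apply Dn_0. intros x. apply ex_derive_comp. eapply Dn_ex; eauto.
    exists a. exact (is_derive_affine a b x).
  - pose proof Hf as Hf'. apply Dn_S in Hf as [Hf1 Hf2].
    apply Dn_S. split.
    + intros x. apply ex_derive_comp; auto. exists a. exact (is_derive_affine a b x).
    + apply Dn_ext with (fun x => a * Derive f (a * x + b)).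
      * intros x. rewrite Derive_comp_affine; auto.
      * apply Dn_scal. apply IHn; auto.
Qed.

Lemma smooth1_plus f g : smooth1 f -> smooth1 g -> smooth1 (fun x => f x + g x).
Proof. rewrite !smooth1_Dn. intros; apply Dn_plus; auto. Qed.
Lemma smooth1_scal c f : smooth1 f -> smooth1 (fun x => c * f x).
Proof. rewrite !smooth1_Dn. intros; apply Dn_scal; auto. Qed.
Lemma smooth1_const c : smooth1 (fun _ => c).
Proof. rewrite !smooth1_Dn. intros; apply Dn_const; auto. Qed.
Lemma smooth1_id : smooth1 (fun x => x).
Proof. rewrite !smooth1_Dn. intros; apply Dn_id; auto. Qed.
Lemma smooth1_mult f g : smooth1 f -> smooth1 g -> smooth1 (fun x => f x * g x).
Proof. rewrite !smooth1_Dn. intros; apply Dn_mult; auto. Qed.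
Lemma smooth1_inv f : smooth1 f -> (forall x, f x <> 0) -> smooth1 (fun x => / f x).
Proof. rewrite !smooth1_Dn. intros; apply Dn_inv; auto. Qed.
Lemma smooth1_comp_affine a b f : smooth1 f -> smooth1 (fun x => f (a * x + b)).
Proof. rewrite !smooth1_Dn. intros; apply Dn_comp_affine; auto. Qed.
Lemma smooth1_Derive f : smooth1 f -> smooth1 (Derive f).
Proof. intros H n x. rewrite Derive_n_Derive. apply H. Qed.
Lemma smooth1_Derive_n f n : smooth1 f -> smooth1 (Derive_n f n).
Proof. intros H. induction n; simpl; auto. apply smooth1_Derive; auto. Qed.
Lemma smooth1_ex f x : smooth1 f -> ex_derive f x.
Proof. intros H. apply (H 0%nat). Qed.
Lemma smooth1_cont f (x : R) : smooth1 f -> continuous f x.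
Proof. intros H. exact (ex_derive_continuous f x (smooth1_ex f x H)). Qed.
Lemma smooth1_iff f : smooth1 f <-> (forall x : R, ex_derive f x) /\ smooth1 (Derive f).
Proof.
  split.
  - intros H; split; [intros; apply smooth1_ex; auto| apply smooth1_Derive; auto].
  - intros [H1 H2]. apply smooth1_Dn. intros [|n].
    + apply Dn_0. intros x; apply H1.
    + apply Dn_S. split; auto. apply smooth1_Dn; auto.
Qed.

Lemma line_x_Derive_n F y0 z0 n :
  Derive_n (fun t => F t y0 z0) n = fun t => iter_pd3 (repeat DX n) F t y0 z0.
Proof. induction n; simpl; auto. rewrite IHn. reflexivity. Qed.

Lemma line_y_Derive_n F x0 z0 n :
  Derive_n (fun t => F x0 t z0) n = fun t => iter_pd3 (repeat DY n) F x0 t z0.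
Proof. induction n; simpl; auto. rewrite IHn. reflexivity. Qed.

Lemma smooth1_line_x F y0 z0 : smooth3 F -> smooth1 (fun t => F t y0 z0).
Proof.
  intros H n x. rewrite line_x_Derive_n. destruct (H (repeat DX n)) as [_ H2].
  exact (H2 DX x y0 z0).
Qed.

Lemma smooth1_line_y F x0 z0 : smooth3 F -> smooth1 (fun t => F x0 t z0).
Proof.
  intros H n x. rewrite line_y_Derive_n. destruct (H (repeat DY n)) as [_ H2].
  exact (H2 DY x0 x z0).
Qed.

Lemma isd_plus (f g : R -> R) x a b : is_derive f x a -> is_derive g x b ->
  is_derive (fun y => f y + g y) x (a + b).
Proof. intros H1 H2. exact (is_derive_plus (K:=R_AbsRing) (V:=R_NormedModule) f g x a b H1 H2). Qed.
Lemma isd_mult (f g : R -> R) x a b : is_derive f x a -> is_derive g x b ->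
  is_derive (fun y => f y * g y) x (a * g x + f x * b).
Proof. intros H1 H2. exact (is_derive_mult (K:=R_AbsRing) f g x a b H1 H2 Rmult_comm). Qed.
Lemma isd_comp (f g : R -> R) x a b : is_derive f (g x) a -> is_derive g x b ->
  is_derive (fun y => f (g y)) x (b * a).
Proof. intros H1 H2. exact (is_derive_comp (K:=R_AbsRing) (V:=R_NormedModule) f g x a b H1 H2). Qed.
Lemma isd_const (c x : R) : is_derive (fun _ => c) x 0.
Proof. exact (is_derive_const (K:=R_AbsRing) (V:=R_NormedModule) c x). Qed.
Lemma isd_id (x : R) : is_derive (fun y => y) x 1.
Proof. exact (is_derive_id (K:=R_AbsRing) x). Qed.
Lemma isd_scal (f : R -> R) c x a : is_derive f x a -> is_derive (fun y => c * f y) x (c * a).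
Proof. intros H. exact (is_derive_scal f x c a H). Qed.
Lemma isd_ext (f g : R -> R) (x a b : R) : (forall y, f y = g y) -> a = b -> is_derive f x a -> is_derive g x b.
Proof. intros E E2 H. subst. exact (is_derive_ext f g x b E H). Qed.
Lemma isd_ext_loc (f g : R -> R) x a : locally x (fun y => f y = g y) -> is_derive f x a -> is_derive g x a.
Proof. intros E H. exact (is_derive_ext_loc f g x a E H). Qed.
Lemma isd_exp (x : R) : is_derive exp x (exp x).
Proof. exact (is_derive_exp x). Qed.
Lemma isd_inv (x : R) : x <> 0 -> is_derive (fun y => / y) x (- / (x * x)).
Proof. intros H. apply (isd_ext (fun y => / y) _ x (- 1 / x ^ 2)).
  - intros y; reflexivity.
  - field. exact H.
  - apply (is_derive_inv (fun y => y) x 1 (isd_id x) H). Qed.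
Lemma isd_unique (f : R -> R) x a : is_derive f x a -> Derive f x = a.
Proof. intros H. exact (is_derive_unique f x a H). Qed.
Lemma isd_ex (f : R -> R) x a : is_derive f x a -> ex_derive f x.
Proof. intros H. exists a. exact H. Qed.

Inductive IsPoly : (R -> R) -> Prop :=
| IP_const c : IsPoly (fun _ => c)
| IP_id : IsPoly (fun x => x)
| IP_plus p q : IsPoly p -> IsPoly q -> IsPoly (fun x => p x + q x)
| IP_mult p q : IsPoly p -> IsPoly q -> IsPoly (fun x => p x * q x).

Lemma IsPoly_deriv p : IsPoly p -> exists p', IsPoly p' /\ forall y, is_derive p y (p' y).
Proof.
  induction 1.
  - exists (fun _ => 0). split. constructor. intros y. apply isd_const.
  - exists (fun _ => 1). split. constructor. intros y. apply isd_id.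
  - destruct IHIsPoly1 as [p' [Hp1 Hp2]]. destruct IHIsPoly2 as [q' [Hq1 Hq2]].
    exists (fun y => p' y + q' y). split. constructor; auto.
    intros y. apply isd_plus; auto.
  - destruct IHIsPoly1 as [p' [Hp1 Hp2]]. destruct IHIsPoly2 as [q' [Hq1 Hq2]].
    exists (fun y => p' y * q y + p y * q' y). split. repeat constructor; auto.
    intros y. apply isd_mult; auto.
Qed.

Lemma IsPoly_bound p : IsPoly p -> exists C m, 0 <= C /\ forall y, 1 <= y -> Rabs (p y) <= C * y ^ m.
Proof.
  induction 1.
  - exists (Rabs c), 0%nat. split. apply Rabs_pos. intros y Hy. simpl. lra.
  - exists 1, 1%nat. split. lra. intros y Hy. simpl. rewrite Rabs_right; lra.
  - destruct IHIsPoly1 as [C1 [m1 [HC1 H1]]]. destruct IHIsPoly2 as [C2 [m2 [HC2 H2]]].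
    exists (C1 + C2), (m1 + m2)%nat. split. lra. intros y Hy.
    pose proof (Rle_pow y m1 (m1+m2) Hy ltac:(lia)).
    pose proof (Rle_pow y m2 (m1+m2) Hy ltac:(lia)).
    pose proof (H1 y Hy). pose proof (H2 y Hy).
    eapply Rle_trans. apply Rabs_triang. nra.
  - destruct IHIsPoly1 as [C1 [m1 [HC1 H1]]]. destruct IHIsPoly2 as [C2 [m2 [HC2 H2]]].
    exists (C1 * C2), (m1 + m2)%nat. split. nra. intros y Hy.
    rewrite Rabs_mult, pow_add.
    pose proof (H1 y Hy). pose proof (H2 y Hy).
    pose proof (Rabs_pos (p y)). pose proof (Rabs_pos (q y)).
    pose proof (pow_le y m1 ltac:(lra)). pose proof (pow_le y m2 ltac:(lra)).
    nra.
Qed.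

Lemma sum_taylor_nonneg x n : 0 <= x -> 0 <= sum_f_R0 (fun k => x ^ k / INR (Factorial.fact k)) n.
Proof.
  intros Hx. induction n.
  - simpl. unfold Rdiv. rewrite Rinv_1. lra.
  - rewrite tech5. apply Rplus_le_le_0_compat; auto. apply Rdiv_le_0_compat. apply pow_le; auto.
    apply lt_0_INR. apply Factorial.lt_O_fact.
Qed.

Lemma exp_dom k y : 0 < y -> y ^ k * exp (- y) <= INR (Factorial.fact (S k)) / y.
Proof.
  intros Hy.
  pose proof (exp_ge_taylor y (S k) ltac:(lra)) as H. rewrite tech5 in H.
  pose proof (sum_taylor_nonneg y k ltac:(lra)).
  assert (Hf : 0 < INR (Factorial.fact (S k))) by (apply lt_0_INR; apply Factorial.lt_O_fact).
  assert (H1 : y ^ S k / INR (Factorial.fact (S k)) <= exp y) by lra.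
  assert (H2: y ^ S k <= INR (Factorial.fact (S k)) * exp y).
  { replace (y ^ S k) with (y ^ S k / INR (Factorial.fact (S k)) * INR (Factorial.fact (S k))) by (field; lra). nra. }
  change (y ^ S k) with (y * y ^ k) in H2.
  rewrite exp_Ropp.
  pose proof (exp_pos y).
  apply (Rmult_le_reg_r (exp y * y)). nra.
  assert (E: y ^ k * / exp y * (exp y * y) = y * y ^ k) by (field; lra).
  rewrite E.
  assert (E2: INR (Factorial.fact (S k)) / y * (exp y * y) = INR (Factorial.fact (S k)) * exp y) by (field; lra).
  rewrite E2. exact H2.
Qed.

Lemma flat_lim q : IsPoly q -> forall eps, 0 < eps -> exists delta, 0 < delta /\
  forall h, 0 < h < delta -> Rabs (q (/ h) * exp (- / h) / h) < eps.
Proof.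
  intros Hq eps He.
  destruct (IsPoly_bound (fun y => y * q y) ltac:(constructor; auto; constructor)) as [C [m [HC HB]]].
  set (K := INR (Factorial.fact (S m))).
  assert (HK : 0 < K) by (apply lt_0_INR; apply Factorial.lt_O_fact).
  exists (Rmin 1 (eps / (C * K + 1))). split.
  { apply Rmin_pos. lra. apply Rdiv_lt_0_compat; nra. }
  intros h [Hh1 Hh2].
  set (y := / h).
  assert (Hy1 : 1 < y). { unfold y. pose proof (Rmin_l 1 (eps / (C*K+1))).
    apply (Rmult_lt_reg_r h); auto. rewrite Rinv_l; lra. }
  assert (Hy2 : (C * K + 1) / eps < y).
  { unfold y. pose proof (Rmin_r 1 (eps / (C*K+1))).
    assert (h < eps / (C*K+1)) by lra.
    apply (Rmult_lt_reg_r h); auto. rewrite Rinv_l; try lra.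
    apply (Rmult_lt_reg_r ((C*K+1)/eps)). apply Rdiv_lt_0_compat; nra.
    replace ((C * K + 1) / eps * h * ((C * K + 1) / eps)) with (h * ((C*K+1)/eps) * ((C*K+1)/eps)) by ring.
    assert (h * ((C * K + 1) / eps) < 1).
    { apply (Rmult_lt_reg_r (eps / (C*K+1))). apply Rdiv_lt_0_compat; nra.
      replace (h * ((C * K + 1) / eps) * (eps / (C * K + 1))) with h by (field; nra). lra. }
    assert (0 < (C*K+1)/eps) by (apply Rdiv_lt_0_compat; nra). nra. }
  assert (E: q y * exp (- y) / h = (y * q y) * exp (-y)) by (unfold y; field; lra).
  rewrite E.
  rewrite Rabs_mult, (Rabs_right (exp (- y))) by (apply Rle_ge, Rlt_le, exp_pos).
  pose proof (HB y ltac:(lra)).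
  pose proof (exp_dom m y ltac:(lra)). fold K in H0.
  pose proof (exp_pos (- y)).
  assert (Rabs (y * q y) * exp (- y) <= C * (y ^ m * exp (- y))) by nra.
  assert (C * (y ^ m * exp (- y)) <= C * (K / y)) by (apply Rmult_le_compat_l; auto).
  assert (C * (K / y) < eps).
  { apply (Rmult_lt_reg_r y). lra. replace (C * (K / y) * y) with (C * K) by (field; lra).
    assert ((C*K+1)/eps * eps = C * K + 1) by (field; lra). nra. }
  lra.
Qed.

Definition fq (q : R -> R) (x : R) : R := if Rlt_dec 0 x then q (/ x) * exp (- / x) else 0.

Lemma fq_deriv q : IsPoly q -> exists r, IsPoly r /\ forall x, is_derive (fq q) x (fq r x).
Proof.
  intros Hq. destruct (IsPoly_deriv q Hq) as [q' [Hq'1 Hq'2]].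
  exists (fun y => y * y * (q y + (-1) * q' y)). split.
  { repeat constructor; auto. }
  intros x. destruct (Rtotal_order x 0) as [Hx|[Hx|Hx]].
  -
    apply (isd_ext_loc (fun _ => 0)).
    + apply (locally_interval _ x m_infty 0); simpl; auto.
      intros y _ Hy. unfold fq. destruct (Rlt_dec 0 y); auto; lra.
    + unfold fq. destruct (Rlt_dec 0 x); try lra. apply isd_const.
  - subst x. apply is_derive_Reals. intros eps Heps.
    destruct (flat_lim q Hq eps Heps) as [d [Hd Hd2]].
    exists (mkposreal d Hd). intros h Hh0 Hh. simpl in Hh.
    unfold fq. rewrite Rplus_0_l. destruct (Rlt_dec 0 0); try lra.
    destruct (Rlt_dec 0 h).
    + replace ((q (/ h) * exp (- / h) - 0) / h - 0) with (q (/ h) * exp (- / h) / h) by (field; lra).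
      apply Hd2. split; auto. rewrite Rabs_right in Hh; lra.
    + replace ((0 - 0) / h - 0) with 0 by (field; auto). rewrite Rabs_R0; lra.
  - apply (isd_ext_loc (fun x => q (/ x) * exp (- / x))).
    + apply (locally_interval _ x 0 p_infty); simpl; auto.
      intros y Hy _. unfold fq. destruct (Rlt_dec 0 y); auto; lra.
    + unfold fq. destruct (Rlt_dec 0 x); try lra.
      assert (Hi := isd_inv x ltac:(lra)).
      assert (H1 := isd_comp q (fun y => / y) x _ _ (Hq'2 (/ x)) Hi).
      assert (Hu : is_derive (fun y => - / y) x (/ (x * x))).
      { auto_derive; [lra | field; lra]. }
      assert (H2 := isd_comp exp (fun y => - / y) x _ _ (isd_exp (- / x)) Hu).
      assert (H3 := isd_mult (fun y => q (/ y)) (fun y => exp (- / y)) x _ _ H1 H2).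
      eapply isd_ext; [ intros y; reflexivity | | exact H3].
      cbv beta. field. lra.
Qed.

Lemma fq_Dn n : forall q, IsPoly q -> Dn n (fq q).
Proof.
  induction n; intros q Hq; destruct (fq_deriv q Hq) as [r [Hr Hd]].
  - apply Dn_0. intros x. exact (isd_ex _ _ _ (Hd x)).
  - apply Dn_S. split.
    + intros x. exact (isd_ex _ _ _ (Hd x)).
    + apply Dn_ext with (fq r).
      * intros x. symmetry. apply isd_unique. apply Hd.
      * apply IHn; auto.
Qed.

Definition psi := fq (fun _ => 1).

Lemma smooth1_psi : smooth1 psi.
Proof. apply smooth1_Dn. intros n. apply fq_Dn. constructor. Qed.

Lemma psi_nonpos x : x <= 0 -> psi x = 0.
Proof. intros H. unfold psi, fq. destruct (Rlt_dec 0 x); auto; lra. Qed.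

Lemma psi_pos x : 0 < x -> 0 < psi x.
Proof. intros H. unfold psi, fq. destruct (Rlt_dec 0 x); try lra. rewrite Rmult_1_l. apply exp_pos. Qed.

Lemma psi_nonneg x : 0 <= psi x.
Proof. destruct (Rle_dec x 0). rewrite psi_nonpos; auto; lra. apply Rlt_le, psi_pos. lra. Qed.

Definition phi_b (u : R) : R := psi (2 - u) * / (psi (2 - u) + psi (u - 1)).

Lemma phi_den_pos u : 0 < psi (2 - u) + psi (u - 1).
Proof.
  destruct (Rlt_dec u 2).
  - pose proof (psi_pos (2 - u) ltac:(lra)). pose proof (psi_nonneg (u - 1)). lra.
  - pose proof (psi_pos (u - 1) ltac:(lra)). pose proof (psi_nonneg (2 - u)). lra.
Qed.

Lemma smooth1_phi_b : smooth1 phi_b.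
Proof.
  assert (H1 : smooth1 (fun u => psi (2 - u))).
  { apply smooth1_ext with (fun u => psi ((-1) * u + 2)). intros; f_equal; ring.
    apply smooth1_comp_affine, smooth1_psi. }
  assert (H2 : smooth1 (fun u => psi (u - 1))).
  { apply smooth1_ext with (fun u => psi (1 * u + (-1))). intros; f_equal; ring.
    apply smooth1_comp_affine, smooth1_psi. }
  apply smooth1_mult; auto. apply smooth1_inv. apply smooth1_plus; auto.
  intros u. pose proof (phi_den_pos u). lra.
Qed.

Lemma phi_b_one u : u <= 1 -> phi_b u = 1.
Proof.
  intros H. unfold phi_b. rewrite (psi_nonpos (u - 1)) by lra.
  pose proof (psi_pos (2 - u) ltac:(lra)). field. lra.
Qed.

Lemma phi_b_zero u : 2 <= u -> phi_b u = 0.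
Proof. intros H. unfold phi_b. rewrite (psi_nonpos (2 - u)) by lra. ring. Qed.

Definition chi (u : R) : R := phi_b u * phi_b (- u).

Lemma smooth1_chi : smooth1 chi.
Proof.
  apply smooth1_mult. apply smooth1_phi_b.
  apply smooth1_ext with (fun u => phi_b ((-1) * u + 0)). intros; f_equal; ring.
  apply smooth1_comp_affine, smooth1_phi_b.
Qed.

Lemma chi_one u : Rabs u <= 1 -> chi u = 1.
Proof.
  intros H. unfold chi. apply Rabs_le_between in H.
  rewrite !phi_b_one by lra. ring.
Qed.

Lemma chi_zero u : 2 <= Rabs u -> chi u = 0.
Proof.
  intros H. unfold chi. destruct (Rle_dec 0 u).
  - rewrite Rabs_right in H by lra. rewrite phi_b_zero by lra. ring.
  - rewrite Rabs_left in H by lra. rewrite (phi_b_zero (- u)) by lra. ring.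
Qed.

Lemma Derive_n_zero k x : Derive_n (fun _ : R => 0) k x = 0.
Proof. destruct k. reflexivity. apply Derive_n_const. Qed.

Lemma smooth1_cont_pt f x : smooth1 f -> continuity_pt f x.
Proof. intros H. apply continuity_pt_filterlim. apply (smooth1_cont f x H). Qed.

Lemma smooth_bound_compact f a b : a <= b -> smooth1 f ->
  exists M, 0 <= M /\ forall u, a <= u <= b -> Rabs (f u) <= M.
Proof.
  intros Hab Hf.
  destruct (continuity_ab_maj (fun u => Rabs (f u)) a b Hab) as [Mx [H1 H2]].
  { intros c _. apply (continuity_pt_comp f Rabs). apply smooth1_cont_pt; auto.
    apply Rcontinuity_abs. }
  exists (Rabs (f Mx)). split. apply Rabs_pos. auto.
Qed.

Lemma Derive_n_scal_comp f a k x : smooth1 f ->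
  Derive_n (fun y => f (a * y)) k x = a ^ k * Derive_n f k (a * x).
Proof.
  intros Hf. apply Derive_n_comp_scal.
  apply filter_forall. intros y j Hj. destruct j; simpl; auto.
Qed.


Definition Pn (n : nat) (u : R) : R := u ^ n * chi u / INR (Factorial.fact n).

Lemma smooth1_pow n : smooth1 (fun u => u ^ n).
Proof.
  induction n.
  - apply smooth1_ext with (fun _ => 1). intros; simpl; auto. apply smooth1_const.
  - apply smooth1_ext with (fun u => u * u ^ n). intros; simpl; auto.
    apply smooth1_mult; auto. apply smooth1_id.
Qed.

Lemma smooth1_Pn n : smooth1 (Pn n).
Proof.
  unfold Pn. apply smooth1_ext with (fun u => / INR (Factorial.fact n) * (u ^ n * chi u)).
  { intros u. unfold Rdiv. ring. }
  apply smooth1_scal. apply smooth1_mult. apply smooth1_pow. apply smooth1_chi.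
Qed.

Lemma Pn_deriv_out n k u : 2 < Rabs u -> Derive_n (Pn n) k u = 0.
Proof.
  intros Hu. rewrite <- (Derive_n_zero k u). apply Derive_n_ext_loc.
  destruct (Rle_dec 0 u).
  - rewrite Rabs_right in Hu by lra.
    apply (locally_interval _ u 2 p_infty); simpl; auto.
    intros y Hy _. unfold Pn. rewrite chi_zero. unfold Rdiv; ring.
    rewrite Rabs_right; lra.
  - rewrite Rabs_left in Hu by lra.
    apply (locally_interval _ u m_infty (-2)); simpl; auto. lra.
    intros y _ Hy. unfold Pn. rewrite chi_zero. unfold Rdiv; ring.
    rewrite Rabs_left; lra.
Qed.

Lemma Pn_bound n k : exists M, 0 <= M /\ forall u, Rabs (Derive_n (Pn n) k u) <= M.
Proof.
  destruct (smooth_bound_compact (Derive_n (Pn n) k) (-2) 2 ltac:(lra)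
             (smooth1_Derive_n _ k (smooth1_Pn n))) as [M [HM1 HM2]].
  exists M. split; auto. intros u.
  destruct (Rle_dec (Rabs u) 2).
  - apply HM2. apply Rabs_le_between; auto.
  - rewrite Pn_deriv_out by lra. rewrite Rabs_R0; auto.
Qed.

Lemma Pn_bound_all n : exists M, 0 <= M /\
  forall k, (k <= n)%nat -> forall u, Rabs (Derive_n (Pn n) k u) <= M.
Proof.
  assert (forall j, exists M, 0 <= M /\
    forall k, (k <= j)%nat -> forall u, Rabs (Derive_n (Pn n) k u) <= M).
  { induction j.
    - destruct (Pn_bound n 0) as [M [H1 H2]]. exists M. split; auto.
      intros k Hk. replace k with 0%nat by lia. auto.
    - destruct IHj as [M1 [H1 H2]]. destruct (Pn_bound n (S j)) as [M2 [H3 H4]].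
      exists (Rmax M1 M2). split. apply (Rle_trans _ M1); auto; apply Rmax_l.
      intros k Hk u. destruct (Nat.eq_dec k (S j)).
      + subst. eapply Rle_trans. apply H4. apply Rmax_r.
      + eapply Rle_trans. apply H2. lia. apply Rmax_l. }
  apply H.
Qed.

Lemma Mfun_ex : exists M : nat -> R, forall n, 0 <= M n /\
  forall k, (k <= n)%nat -> forall u, Rabs (Derive_n (Pn n) k u) <= M n.
Proof.
  apply (functional_choice (fun n M => 0 <= M /\
    forall k, (k <= n)%nat -> forall u, Rabs (Derive_n (Pn n) k u) <= M)).
  apply Pn_bound_all.
Qed.


Definition HMprop (M : nat -> R) (n : nat) := 0 <= M n /\
  forall k, (k <= n)%nat -> forall u, Rabs (Derive_n (Pn n) k u) <= M n.

Definition lam (c M : nat -> R) (n : nat) : R := 1 + 2 ^ n * Rabs (c n) * M n.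

Definition tn (c M : nat -> R) (n : nat) (s : R) : R :=
  (c n / lam c M n ^ n) * Pn n (lam c M n * s).

Lemma lam_ge1 c M n : HMprop M n -> 1 <= lam c M n.
Proof.
  intros [H _]. unfold lam. pose proof (pow_le 2 n ltac:(lra)).
  pose proof (Rabs_pos (c n)).
  assert (0 <= 2 ^ n * Rabs (c n) * M n) by (apply Rmult_le_pos; [apply Rmult_le_pos|]; auto).
  lra.
Qed.

Lemma smooth1_tn c M n : smooth1 (tn c M n).
Proof.
  unfold tn. apply smooth1_scal.
  apply smooth1_ext with (fun s => Pn n (lam c M n * s + 0)). intros; f_equal; ring.
  apply smooth1_comp_affine, smooth1_Pn.
Qed.

Lemma tn_deriv c M n k s : Derive_n (tn c M n) k s =
  (c n / lam c M n ^ n) * (lam c M n ^ k * Derive_n (Pn n) k (lam c M n * s)).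
Proof.
  unfold tn. rewrite Derive_n_scal_l. f_equal.
  apply Derive_n_scal_comp. apply smooth1_Pn.
Qed.

Lemma tn_bound c M n k s : HMprop M n -> (k < n)%nat ->
  Rabs (Derive_n (tn c M n) k s) <= (/ 2) ^ n.
Proof.
  intros HM Hk. rewrite tn_deriv.
  pose proof (lam_ge1 c M n HM) as Hl.
  set (l := lam c M n) in *.
  destruct HM as [HM0 HM].
  pose proof (HM k ltac:(lia) (l * s)) as HD.
  set (D := Derive_n (Pn n) k (l * s)) in *.
  assert (Hlk : 0 < l ^ k) by (apply pow_lt; lra).
  assert (Hln : l ^ k * l <= l ^ n).
  { replace n with (k + (n - k))%nat by lia. rewrite pow_add.
    apply Rmult_le_compat_l. lra.
    replace l with (l ^ 1) at 1 by (simpl; ring). apply Rle_pow; auto. lia. }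
  assert (Hln0 : 0 < l ^ n) by (apply pow_lt; lra).
  assert (Hp : 0 < 2 ^ n) by (apply pow_lt; lra).
  pose proof (Rabs_pos (c n)) as Hc.
  rewrite <- Rinv_pow by lra.
  assert (E : Rabs (c n / l ^ n * (l ^ k * D)) = Rabs (c n) * (l ^ k / l ^ n) * Rabs D).
  { rewrite !Rabs_mult. unfold Rdiv. rewrite Rabs_mult, Rabs_inv.
    rewrite (Rabs_right (l ^ n)) by lra. rewrite (Rabs_right (l ^ k)) by lra. ring. }
  rewrite E.
  assert (Hq : l ^ k / l ^ n <= / l).
  { apply (Rmult_le_reg_r (l ^ n * l)). nra.
    replace (l ^ k / l ^ n * (l ^ n * l)) with (l ^ k * l) by (field; lra).
    replace (/ l * (l ^ n * l)) with (l ^ n) by (field; lra). auto. }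
  assert (Hq0 : 0 <= l ^ k / l ^ n) by (apply Rlt_le, Rdiv_lt_0_compat; auto).
  assert (Rabs (c n) * (l ^ k / l ^ n) * Rabs D <= Rabs (c n) * / l * M n).
  { apply Rmult_le_compat. apply Rmult_le_pos; lra. apply Rabs_pos. apply Rmult_le_compat_l; lra. exact HD. }
  assert (HA : 0 <= 2 ^ n * Rabs (c n) * M n) by (apply Rmult_le_pos; [apply Rmult_le_pos|]; lra).
  assert (Rabs (c n) * / l * M n <= / 2 ^ n).
  { unfold l, lam. apply (Rmult_le_reg_r (2 ^ n * (1 + 2 ^ n * Rabs (c n) * M n))).
    apply Rmult_lt_0_compat; auto. lra.
    replace (Rabs (c n) * / (1 + 2 ^ n * Rabs (c n) * M n) * M n *
      (2 ^ n * (1 + 2 ^ n * Rabs (c n) * M n))) with (2 ^ n * Rabs (c n) * M n) by (field; nra).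
    replace (/ 2 ^ n * (2 ^ n * (1 + 2 ^ n * Rabs (c n) * M n))) with (1 + 2 ^ n * Rabs (c n) * M n) by (field; lra).
    lra. }
  lra.
Qed.

Lemma tn_at0 c M n k : HMprop M n ->
  Derive_n (tn c M n) k 0 = if Nat.eq_dec k n then c n else 0.
Proof.
  intros HM. pose proof (lam_ge1 c M n HM) as Hl.
  rewrite (Derive_n_ext_loc _ (fun s => (c n / INR (Factorial.fact n)) * s ^ n)).
  - rewrite Derive_n_scal_l, Derive_n_pow.
    destruct (Compare_dec.le_dec k n).
    + destruct (Nat.eq_dec k n).
      * subst. rewrite Nat.sub_diag. simpl. field. apply INR_fact_neq_0.
      * rewrite pow_i by lia. ring.
    + destruct (Nat.eq_dec k n); try lia. ring.
  - apply (locally_interval _ 0 (- / lam c M n) (/ lam c M n)); simpl.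
    + assert (0 < / lam c M n) by (apply Rinv_0_lt_compat; lra). lra.
    + apply Rinv_0_lt_compat; lra.
    + intros y Hy1 Hy2. unfold tn, Pn. rewrite chi_one.
      * rewrite Rpow_mult_distr. field. split. apply INR_fact_neq_0. apply pow_nonzero. lra.
      * apply Rabs_le_between. split.
        -- apply (Rmult_le_reg_r (/ lam c M n)). apply Rinv_0_lt_compat; lra.
           replace (lam c M n * y * / lam c M n) with y by (field; lra). lra.
        -- apply (Rmult_le_reg_r (/ lam c M n)). apply Rinv_0_lt_compat; lra.
           replace (lam c M n * y * / lam c M n) with y by (field; lra). lra.
Qed.

Definition Bk (c M : nat -> R) (k : nat) (s : R) : R :=
  Series (fun n => Derive_n (tn c M n) k s).

Lemma norm_R (x : R) : norm x = Rabs x.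
Proof. reflexivity. Qed.

Lemma exs_le (a b : nat -> R) : (forall n, Rabs (a n) <= b n) -> ex_series b -> ex_series a.
Proof. intros. apply (ex_series_le (K:=R_AbsRing) (V:=R_CompleteNormedModule) a b); auto. Qed.

Lemma half_pow_le1 m : (/ 2) ^ m <= 1.
Proof. induction m; simpl. lra. pose proof (pow_le (/2) m ltac:(lra)). nra. Qed.

Lemma half_pow_pos m : 0 < (/ 2) ^ m.
Proof. apply pow_lt; lra. Qed.

Lemma ex_series_half : ex_series (fun n => (/ 2) ^ n).
Proof. apply ex_series_geom. rewrite Rabs_right; lra. Qed.

Lemma Series_half_shift N : Series (fun j => (/ 2) ^ (N + j)) = 2 * (/ 2) ^ N.
Proof.
  rewrite (Series_ext _ (fun j => (/2) ^ N * (/ 2) ^ j)) by (intros; apply pow_add).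
  rewrite Series_scal_l, Series_geom. field. rewrite Rabs_right; lra.
Qed.

Lemma ex_series_half_shift N : ex_series (fun j => (/ 2) ^ (N + j)).
Proof. apply (ex_series_incr_n (fun n => (/2)^n) N). apply ex_series_half. Qed.

Lemma terms_bound c M k s (HM : forall n, HMprop M n) n : (k < n)%nat ->
  Rabs (Derive_n (tn c M n) k s) <= (/ 2) ^ n.
Proof. intros. apply tn_bound; auto. Qed.

Lemma ex_series_abs_terms c M k s (HM : forall n, HMprop M n) N : (k < N)%nat ->
  ex_series (fun j => Rabs (Derive_n (tn c M (N + j)) k s)).
Proof.
  intros HN. apply (exs_le _ (fun j => (/ 2) ^ (N + j))).
  - intros j. rewrite Rabs_Rabsolu.
    apply terms_bound; auto. lia.
  - apply ex_series_half_shift.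
Qed.

Lemma ex_series_terms c M k s (HM : forall n, HMprop M n) :
  ex_series (fun n => Derive_n (tn c M n) k s).
Proof.
  apply (ex_series_incr_n _ (S k)). apply ex_series_Rabs.
  apply ex_series_abs_terms; auto.
Qed.

Lemma Bk_tail c M k s (HM : forall n, HMprop M n) N : (k <= N)%nat ->
  Rabs (Bk c M k s - sum_f_R0 (fun n => Derive_n (tn c M n) k s) N) <= (/ 2) ^ N.
Proof.
  intros HN. unfold Bk.
  rewrite (Series_incr_n _ (S N)) by (lia || apply ex_series_terms; auto).
  simpl Init.Nat.pred.
  replace (sum_f_R0 (fun n : nat => Derive_n (tn c M n) k s) N +
    Series (fun k0 : nat => Derive_n (tn c M (S N + k0)) k s) -
    sum_f_R0 (fun n : nat => Derive_n (tn c M n) k s) N) with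
    (Series (fun k0 : nat => Derive_n (tn c M (S N + k0)) k s)) by ring.
  eapply Rle_trans. apply Series_Rabs. apply ex_series_abs_terms; auto. lia.
  eapply Rle_trans. apply (Series_le _ (fun j => (/ 2) ^ (S N + j))).
  - intros j. split. apply Rabs_pos. apply terms_bound; auto. lia.
  - apply ex_series_half_shift.
  - rewrite Series_half_shift. simpl. lra.
Qed.

Lemma Bk_CVU c M k (HM : forall n, HMprop M n) x r :
  CVU (fun N y => sum_f_R0 (fun n => Derive_n (tn c M n) k y) N) (Bk c M k) x r.
Proof.
  intros eps Heps.
  destruct (pow_lt_1_zero (/ 2) ltac:(rewrite Rabs_right; lra) eps Heps) as [N HN].
  exists (N + k)%nat. intros n y Hn _.
  eapply Rle_lt_trans. apply Bk_tail; auto. lia.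
  specialize (HN n ltac:(lia)). rewrite Rabs_right in HN; auto.
  apply Rle_ge, Rlt_le, half_pow_pos.
Qed.

Lemma partial_deriv c M k N x :
  derivable_pt_lim (fun y => sum_f_R0 (fun n => Derive_n (tn c M n) k y) N) x
    (sum_f_R0 (fun n => Derive_n (tn c M n) (S k) x) N).
Proof.
  assert (Hd : forall n, derivable_pt_lim (Derive_n (tn c M n) k) x (Derive_n (tn c M n) (S k) x)).
  { intros n. apply is_derive_Reals. simpl.
    apply Derive_correct. apply smooth1_tn. }
  induction N.
  - simpl. apply Hd.
  - simpl. apply (derivable_pt_lim_plus _ (Derive_n (tn c M (S N)) k)); auto.
Qed.

Lemma partial_cont c M k N x :
  continuity_pt (fun y => sum_f_R0 (fun n => Derive_n (tn c M n) k y) N) x.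
Proof.
  assert (Hd : forall n, continuity_pt (Derive_n (tn c M n) k) x).
  { intros n. apply smooth1_cont_pt. apply smooth1_Derive_n, smooth1_tn. }
  induction N.
  - simpl. apply Hd.
  - simpl. apply (continuity_pt_plus _ (Derive_n (tn c M (S N)) k)); auto.
Qed.

Lemma Bk_deriv c M k (HM : forall n, HMprop M n) s :
  is_derive (Bk c M k) s (Bk c M (S k) s).
Proof.
  apply is_derive_Reals.
  apply (CVU_derivable (fun N y => sum_f_R0 (fun n => Derive_n (tn c M n) k y) N)
                       (fun N y => sum_f_R0 (fun n => Derive_n (tn c M n) (S k) y) N)
                       (Bk c M k) (Bk c M (S k)) s (mkposreal 1 Rlt_0_1)).
  - apply Bk_CVU; auto.
  - intros y _. apply is_series_Reals. apply Series_correct. apply ex_series_terms; auto.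
  - intros n y _. apply partial_deriv.
  - unfold Boule. simpl. rewrite Rminus_eq_0, Rabs_R0. lra.
Qed.

Lemma Series_single c k : Series (fun n => if Nat.eq_dec k n then c n else 0) = c k.
Proof.
  rewrite (Series_incr_n _ (S k)).
  - simpl Init.Nat.pred.
    rewrite (Series_ext _ (fun n => 0 * 0)).
    + rewrite Series_scal_l. rewrite Rmult_0_l, Rplus_0_r.
      destruct k.
      * simpl. destruct (Nat.eq_dec 0 0); try lia. auto.
      * rewrite tech5. destruct (Nat.eq_dec (S k) (S k)); try lia.
        assert (forall m, (m <= k)%nat -> sum_f_R0 (fun n => if Nat.eq_dec (S k) n then c n else 0) m = 0).
        { induction m; intros Hm.
          - simpl. destruct (Nat.eq_dec (S k) 0); try lia. auto.
          - rewrite tech5, IHm by lia. destruct (Nat.eq_dec (S k) (S m)); try lia. ring. }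
        rewrite H; auto. ring.
    + intros n. destruct (Nat.eq_dec k (S k + n)); try lia. ring.
  - lia.
  - apply (ex_series_incr_n _ (S k)). apply (exs_le _ (fun n => (/2)^n)).
    + intros n. destruct (Nat.eq_dec k (S k + n)); try lia.
      rewrite Rabs_R0. apply Rlt_le, half_pow_pos.
    + apply ex_series_half.
Qed.

Theorem Borel (c : nat -> R) : exists B, smooth1 B /\ forall k, Derive_n B k 0 = c k.
Proof.
  destruct (Mfun_ex) as [M HM].
  assert (HD : forall k, Derive_n (Bk c M 0) k = Bk c M k).
  { induction k; auto. simpl. rewrite IHk. apply functional_extensionality. intros s.
    apply isd_unique. apply Bk_deriv; auto. }
  exists (Bk c M 0). split.
  - intros n x. rewrite HD. exists (Bk c M (S n) x). apply Bk_deriv; auto.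
  - intros k. rewrite HD. unfold Bk.
    rewrite (Series_ext _ (fun n => if Nat.eq_dec k n then c n else 0))
      by (intros n; apply tn_at0; exact (HM n)).
    apply Series_single.
Qed.

Lemma exRInt_cont (f : R -> R) a b : (forall z, Rmin a b <= z <= Rmax a b -> continuous f z) -> ex_RInt f a b.
Proof. intros H. exact (ex_RInt_continuous (V:=R_CompleteNormedModule) f a b H). Qed.

Definition Kint (u : R -> R) (n : nat) (x : R) : R :=
  RInt (fun t => t ^ n * Derive_n u (S n) (t * x)) 0 1.

Lemma isd_Kf u n t z : smooth1 u ->
  is_derive (fun z => t ^ n * Derive_n u (S n) (t * z)) z (t ^ (S n) * Derive_n u (S (S n)) (t * z)).
Proof.
  intros Hu.
  assert (H1 : is_derive (Derive_n u (S n)) (t * z) (Derive_n u (S (S n)) (t * z))).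
  { simpl. apply Derive_correct. apply (Hu (S n)). }
  assert (H2 : is_derive (fun z => t * z) z t) by (auto_derive; auto; ring).
  assert (H3 := isd_comp _ _ z _ _ H1 H2).
  assert (H4 := isd_scal _ (t ^ n) z _ H3).
  eapply isd_ext; [intros; reflexivity| | exact H4]. simpl. ring.
Qed.

Lemma cont_Kf u n y z : smooth1 u -> continuous (fun t => t ^ n * Derive_n u (S n) (t * y)) z.
Proof.
  intros Hu. apply (ex_derive_continuous (K:=R_AbsRing) (V:=R_NormedModule)).
  assert (H1 : is_derive (Derive_n u (S n)) (z * y) (Derive_n u (S (S n)) (z * y))).
  { simpl. apply Derive_correct. apply (Hu (S n)). }
  assert (H2 : is_derive (fun t => t * y) z y) by (auto_derive; auto; ring).
  assert (H3 := isd_comp _ _ z _ _ H1 H2).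
  assert (H5 : is_derive (fun t => t ^ n) z (INR n * z ^ pred n)) by (auto_derive; auto; ring).
  assert (H4 := isd_mult _ _ z _ _ H5 H3).
  exact (isd_ex _ _ _ H4).
Qed.

Lemma K_deriv u n x : smooth1 u -> is_derive (Kint u n) x (Kint u (S n) x).
Proof.
  intros Hu. unfold Kint.
  assert (HD : forall t z, Derive (fun z => t ^ n * Derive_n u (S n) (t * z)) z =
     t ^ (S n) * Derive_n u (S (S n)) (t * z)).
  { intros t z. apply isd_unique. apply isd_Kf; auto. }
  assert (E : RInt (fun t => t ^ S n * Derive_n u (S (S n)) (t * x)) 0 1 =
              RInt (fun t => Derive (fun z => t ^ n * Derive_n u (S n) (t * z)) x) 0 1).
  { apply RInt_ext. intros t _. rewrite HD. auto. }
  rewrite E.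
  apply (is_derive_RInt_param (fun z t => t ^ n * Derive_n u (S n) (t * z)) 0 1 x).
  - apply filter_forall. intros z t _. exact (isd_ex _ _ _ (isd_Kf u n t z Hu)).
  - intros t _. apply (continuity_2d_pt_ext (fun z v => v ^ S n * Derive_n u (S (S n)) (v * z))).
    { intros z v. rewrite HD. auto. }
    apply continuity_2d_pt_mult.
    + apply (continuity_1d_2d_pt_comp (fun v => v ^ S n) (fun _ v => v)).
      * apply derivable_continuous_pt. apply derivable_pt_pow.
      * apply continuity_2d_pt_id2.
    + apply (continuity_1d_2d_pt_comp (Derive_n u (S (S n))) (fun z v => v * z)).
      * apply smooth1_cont_pt. apply smooth1_Derive_n; auto.
      * apply continuity_2d_pt_mult. apply continuity_2d_pt_id2. apply continuity_2d_pt_id1.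
  - apply filter_forall. intros y. apply exRInt_cont. intros z _. apply cont_Kf; auto.
Qed.

Lemma K_Derive_n u n : smooth1 u -> Derive_n (Kint u 0) n = Kint u n.
Proof.
  intros Hu. induction n; auto. simpl. rewrite IHn. apply functional_extensionality.
  intros x. apply isd_unique. apply K_deriv; auto.
Qed.

Lemma smooth1_K u : smooth1 u -> smooth1 (Kint u 0).
Proof.
  intros Hu n x. rewrite K_Derive_n; auto. exact (isd_ex _ _ _ (K_deriv u n x Hu)).
Qed.

Lemma K_identity u x : smooth1 u -> x * Kint u 0 x = u x - u 0.
Proof.
  intros Hu.
  assert (HD : forall t, is_derive (fun t => u (t * x)) t (x * Derive u (t * x))).
  { intros t. assert (H2 : is_derive (fun t => t * x) t x) by (auto_derive; auto; ring).
    apply (isd_comp u (fun t => t * x) t _ _ (Derive_correct _ _ (smooth1_ex u _ Hu)) H2). }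
  pose proof (RInt_Derive (fun t => u (t * x)) 0 1) as H.
  cbv beta in H. rewrite Rmult_1_l, Rmult_0_l in H. rewrite <- H.
  - rewrite (RInt_ext _ (fun t => x * (t ^ 0 * Derive_n u 1 (t * x)))).
    + unfold Kint. rewrite (RInt_scal (V:=R_CompleteNormedModule)). reflexivity.
      apply exRInt_cont. intros z _. apply cont_Kf; auto.
    + intros t _. transitivity (x * Derive u (t * x)).
      * apply isd_unique. apply HD.
      * simpl. rewrite Rmult_1_l. reflexivity.
  - intros t _. exact (isd_ex _ _ _ (HD t)).
  - intros t _. apply (continuous_ext (fun t => x * Derive u (t * x))).
    + intros z. symmetry. apply isd_unique. apply HD.
    + apply (ex_derive_continuous (K:=R_AbsRing) (V:=R_NormedModule)).
      apply ex_derive_scal. apply (ex_derive_comp (K:=R_AbsRing) (V:=R_NormedModule) (Derive u) (fun t => t * x)).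
      * apply (smooth1_Derive u Hu 0%nat).
      * exists x. auto_derive; auto; ring.
Qed.

Definition Dop (F : R -> R) (x : R) : R := / 2 * Kint (Derive F) 0 x.

Lemma smooth1_Dop F : smooth1 F -> smooth1 (Dop F).
Proof. intros H. apply smooth1_scal. apply smooth1_K. apply smooth1_Derive; auto. Qed.

Lemma Dop_identity F x : smooth1 F -> x * Dop F x * 2 = Derive F x - Derive F 0.
Proof.
  intros H. unfold Dop. rewrite <- (K_identity (Derive F) x) by (apply smooth1_Derive; auto).
  field.
Qed.

Definition evenf (f : R -> R) := forall x, f (- x) = f x.

Lemma Derive_opp_comp f x : ex_derive f (- x) -> Derive (fun y => f (- y)) x = - Derive f (- x).
Proof.
  intros H. apply isd_unique.
  assert (H2 : is_derive (fun y => - y) x (-1)) by (auto_derive; auto).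
  pose proof (isd_comp f (fun y => - y) x _ _ (Derive_correct _ _ H) H2) as H3.
  eapply isd_ext; [intros; reflexivity| | exact H3]. ring.
Qed.

Lemma Derive_even f x : evenf f -> smooth1 f -> Derive f (- x) = - Derive f x.
Proof.
  intros He Hs.
  assert (E : f = fun y => f (- y)) by (apply functional_extensionality; intros; rewrite He; auto).
  rewrite E at 2. rewrite Derive_opp_comp. rewrite Ropp_involutive. ring.
  apply smooth1_ex; auto.
Qed.

Lemma Derive_even_0 f : evenf f -> smooth1 f -> Derive f 0 = 0.
Proof.
  intros He Hs. pose proof (Derive_even f 0 He Hs). rewrite Ropp_0 in H. lra.
Qed.

Lemma Dop_even F : evenf F -> smooth1 F -> evenf (Dop F).
Proof.
  intros He Hs x. destruct (Req_dec x 0).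
  - subst. rewrite Ropp_0. auto.
  - pose proof (Dop_identity F x Hs). pose proof (Dop_identity F (- x) Hs).
    rewrite Derive_even in H1 by auto. rewrite Derive_even_0 in H0, H1 by auto.
    apply (Rmult_eq_reg_l (2 * x)); [lra | lra].
Qed.

Fixpoint Dit (F : R -> R) (n : nat) : R -> R :=
  match n with O => F | S n => Dop (Dit F n) end.

Lemma Dit_smooth_even F n : smooth1 F -> evenf F -> smooth1 (Dit F n) /\ evenf (Dit F n).
Proof.
  intros Hs He. induction n; simpl; auto.
  destruct IHn as [H1 H2]. split.
  - apply smooth1_Dop; auto.
  - apply Dop_even; auto.
Qed.

Lemma sqrt_deriv E s : smooth1 E -> evenf E -> 0 < s ->
  is_derive (fun s => E (sqrt s)) s (Dop E (sqrt s)).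
Proof.
  intros Hs He Hpos.
  assert (Hq : 0 < sqrt s) by (apply sqrt_lt_R0; auto).
  assert (H1 : is_derive sqrt s (/ (2 * sqrt s))).
  { apply is_derive_Reals. apply derivable_pt_lim_sqrt; auto. }
  pose proof (isd_comp E sqrt s _ _ (Derive_correct _ _ (smooth1_ex E (sqrt s) Hs)) H1) as H2.
  eapply isd_ext; [intros; reflexivity| | exact H2].
  pose proof (Dop_identity E (sqrt s) Hs). rewrite Derive_even_0 in H by auto.
  replace (Derive E (sqrt s)) with (sqrt s * Dop E (sqrt s) * 2) by lra. field. lra.
Qed.

Definition Gn (F B : R -> R) (n : nat) (s : R) : R :=
  if Rle_dec 0 s then Dit F n (sqrt s) else Derive_n B n s.

Lemma Gn_deriv F B n s : smooth1 F -> evenf F -> smooth1 B ->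
  (forall k, Derive_n B k 0 = Dit F k 0) ->
  is_derive (Gn F B n) s (Gn F B (S n) s).
Proof.
  intros HF HE HB HB0.
  destruct (Dit_smooth_even F n HF HE) as [Hn1 Hn2].
  destruct (Dit_smooth_even F (S n) HF HE) as [HSn1 HSn2].
  destruct (Rtotal_order s 0) as [Hs|[Hs|Hs]].
  - apply (isd_ext_loc (Derive_n B n)).
    + apply (locally_interval _ s m_infty 0); simpl; auto.
      intros y _ Hy. unfold Gn. destruct (Rle_dec 0 y); auto; lra.
    + unfold Gn. destruct (Rle_dec 0 s); try lra. simpl.
      apply Derive_correct. apply HB.
  - subst s. apply is_derive_Reals. intros eps Heps.
    assert (HL : derivable_pt_lim (Derive_n B n) 0 (Derive_n B (S n) 0)).
    { apply is_derive_Reals. simpl. apply Derive_correct. apply HB. }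
    destruct (HL eps Heps) as [d1 Hd1].
    assert (HC := smooth1_cont_pt _ 0 HSn1).
    destruct (HC eps Heps) as [d2 [Hd2 Hd2']].
    assert (Hd : 0 < Rmin d1 (d2 * d2)) by (apply Rmin_pos; [apply cond_pos| nra]).
    exists (mkposreal _ Hd). intros h Hh0 Hh. simpl in Hh.
    rewrite Rplus_0_l.
    unfold Gn. destruct (Rle_dec 0 0); try lra. rewrite sqrt_0.
    destruct (Rle_dec 0 h).
    +
      assert (Hh1 : 0 < h) by lra.
      destruct (MVT_gen (fun t => Dit F n (sqrt t)) 0 h (fun t => Dit F (S n) (sqrt t))) as [xi [Hxi Hmvt]].
      * intros t Ht. rewrite Rmin_left, Rmax_right in Ht by lra.
        apply sqrt_deriv; auto. lra.
      * intros t Ht. rewrite Rmin_left, Rmax_right in Ht by lra.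
        apply (continuity_pt_comp sqrt (Dit F n)). apply continuity_pt_sqrt. lra.
        apply smooth1_cont_pt; auto.
      * rewrite Rmin_left, Rmax_right in Hxi by lra. cbv beta in Hmvt. rewrite sqrt_0 in Hmvt.
        rewrite Hmvt. replace (Dit F (S n) (sqrt xi) * (h - 0) / h - Dit F (S n) 0) with
          (Dit F (S n) (sqrt xi) - Dit F (S n) 0) by (field; lra).
        assert (sqrt xi <= sqrt h) by (apply sqrt_le_1_alt; lra).
        assert (h < d2 * d2). { rewrite Rabs_right in Hh by lra. pose proof (Rmin_r d1 (d2*d2)). lra. }
        assert (sqrt h < d2).
        { rewrite <- (sqrt_square d2) by lra. apply sqrt_lt_1_alt. lra. }
        pose proof (sqrt_pos xi).
        destruct (Req_dec (sqrt xi) 0) as [E0|E0].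
        { rewrite E0, Rminus_eq_0, Rabs_R0. lra. }
        apply (Hd2' (sqrt xi)). split. split; auto. exact I. simpl. unfold R_dist.
        rewrite Rminus_0_r. rewrite Rabs_right by lra. lra.
    +
      rewrite <- !HB0. 
      assert (Rabs h < d1) by (pose proof (Rmin_l d1 (d2*d2)); lra).
      specialize (Hd1 h Hh0 H). rewrite Rplus_0_l in Hd1. simpl in Hd1. simpl. exact Hd1.
  - apply (isd_ext_loc (fun s => Dit F n (sqrt s))).
    + apply (locally_interval _ s 0 p_infty); simpl; auto.
      intros y Hy _. unfold Gn. destruct (Rle_dec 0 y); auto; lra.
    + unfold Gn. destruct (Rle_dec 0 s); try lra. simpl.
      apply sqrt_deriv; auto.
Qed.

Lemma glue_smooth F B : smooth1 F -> evenf F -> smooth1 B ->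
  (forall k, Derive_n B k 0 = Dit F k 0) ->
  smooth1 (Gn F B 0) /\ forall s, 0 <= s -> Gn F B 0 s = F (sqrt s).
Proof.
  intros HF HE HB HB0.
  assert (HD : forall k, Derive_n (Gn F B 0) k = Gn F B k).
  { induction k; auto. simpl. rewrite IHk. apply functional_extensionality. intros s.
    apply isd_unique. apply Gn_deriv; auto. }
  split.
  - intros n x. rewrite HD. exact (isd_ex _ _ _ (Gn_deriv F B n x HF HE HB HB0)).
  - intros s Hs. unfold Gn. destruct (Rle_dec 0 s); try lra. auto.
Qed.

Theorem whitney_odd h : smooth1 h -> (forall x, h (- x) = - h x) ->
  exists G, smooth1 G /\ forall x, h x = x * G (x ^ 2).
Proof.
  intros Hh Hodd.
  assert (H0 : h 0 = 0). { pose proof (Hodd 0). rewrite Ropp_0 in H. lra. }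
  set (F := Kint h 0).
  assert (HF : smooth1 F) by (apply smooth1_K; auto).
  assert (HId : forall x, x * F x = h x).
  { intros x. unfold F. rewrite K_identity by auto. rewrite H0. ring. }
  assert (HE : evenf F).
  { intros x. destruct (Req_dec x 0).
    - subst. rewrite Ropp_0. auto.
    - pose proof (HId x). pose proof (HId (- x)). rewrite Hodd in H2.
      apply (Rmult_eq_reg_l x); auto. lra. }
  destruct (Borel (fun n => Dit F n 0)) as [B [HB HB0]].
  destruct (glue_smooth F B HF HE HB HB0) as [HG1 HG2].
  exists (Gn F B 0). split; auto.
  intros x. rewrite HG2 by (apply pow2_ge_0).
  replace (x ^ 2) with (Rsqr x) by (unfold Rsqr; ring).
  rewrite sqrt_Rsqr_abs. rewrite <- HId. f_equal.
  destruct (Rle_dec 0 x).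
  - rewrite Rabs_right; lra.
  - rewrite Rabs_left by lra. rewrite HE. auto.
Qed.

Lemma cauchy_nat f : (forall s t, f (s + t) = f s + f t) -> forall n x, f (INR n * x) = INR n * f x.
Proof.
  intros Hf. assert (H0 : f 0 = 0). { pose proof (Hf 0 0). rewrite Rplus_0_l in H. lra. }
  induction n; intros x.
  - simpl. rewrite !Rmult_0_l. auto.
  - rewrite S_INR. replace ((INR n + 1) * x) with (INR n * x + x) by ring.
    rewrite Hf, IHn. ring.
Qed.

Lemma cauchy_opp f : (forall s t, f (s + t) = f s + f t) -> forall x, f (- x) = - f x.
Proof.
  intros Hf x. assert (H0 : f 0 = 0). { pose proof (Hf 0 0). rewrite Rplus_0_l in H. lra. }
  pose proof (Hf x (- x)). rewrite Rplus_opp_r, H0 in H. lra.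
Qed.

Lemma cauchy_int f : (forall s t, f (s + t) = f s + f t) -> forall z x, f (IZR z * x) = IZR z * f x.
Proof.
  intros Hf z x. destruct z.
  - simpl. rewrite Rmult_0_l. pose proof (Hf 0 0). rewrite Rplus_0_l in H. lra.
  - rewrite <- positive_nat_Z, <- INR_IZR_INZ. apply cauchy_nat; auto.
  - rewrite <- Pos2Z.opp_pos, opp_IZR, <- positive_nat_Z, <- INR_IZR_INZ.
    rewrite Ropp_mult_distr_l_reverse, cauchy_opp, cauchy_nat; auto. ring.
Qed.

Lemma cauchy_rat f : (forall s t, f (s + t) = f s + f t) -> forall z n,
  f (IZR z / INR (S n)) = IZR z / INR (S n) * f 1.
Proof.
  intros Hf z n.
  assert (Hn : 0 < INR (S n)) by (apply lt_0_INR; lia).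
  pose proof (cauchy_nat f Hf (S n) (IZR z / INR (S n))).
  replace (INR (S n) * (IZR z / INR (S n))) with (IZR z * 1) in H by (field; lra).
  rewrite cauchy_int in H; auto.
  apply (Rmult_eq_reg_l (INR (S n))); try lra.
  rewrite <- H. field. lra.
Qed.

Lemma cauchy_cont f : (forall s t, f (s + t) = f s + f t) -> (forall t, continuity_pt f t) ->
  forall t, f t = t * f 1.
Proof.
  intros Hf Hc t.
  apply NNPP. intros Hne.
  set (eps := Rabs (f t - t * f 1) / 2).
  assert (Heps : 0 < eps) by (unfold eps; apply Rdiv_lt_0_compat; [apply Rabs_pos_lt; lra| lra]).
  destruct (Hc t eps Heps) as [d [Hd Hd']].
  set (m := Rmin d (eps / (Rabs (f 1) + 1))).
  assert (Hm : 0 < m) by (apply Rmin_pos; auto; apply Rdiv_lt_0_compat; auto; pose proof (Rabs_pos (f 1)); lra).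
  destruct (archimed (/ m)) as [Hup _].
  set (N := Z.to_nat (up (/ m))).
  assert (HN : / m < INR (S N)).
  { unfold N. rewrite S_INR. rewrite INR_IZR_INZ. rewrite Z2Nat.id.
    - lra.
    - apply le_IZR. assert (0 < / m) by (apply Rinv_0_lt_compat; auto). lra. }
  assert (HSN : 0 < INR (S N)) by (apply lt_0_INR; lia).
  set (z := up (INR (S N) * t)).
  destruct (archimed (INR (S N) * t)) as [Hz1 Hz2]. fold z in Hz1, Hz2.
  set (q := IZR z / INR (S N)).
  assert (Hq : Rabs (q - t) <= / INR (S N)).
  { unfold q. rewrite Rabs_right.
    - apply (Rmult_le_reg_l (INR (S N))); auto.
      replace (INR (S N) * (IZR z / INR (S N) - t)) with (IZR z - INR (S N) * t) by (field; lra).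
      rewrite Rinv_r; lra.
    - apply Rle_ge. apply (Rmult_le_reg_l (INR (S N))); auto.
      replace (INR (S N) * (IZR z / INR (S N) - t)) with (IZR z - INR (S N) * t) by (field; lra).
      lra. }
  assert (Hsmall : / INR (S N) < m).
  { apply (Rmult_lt_reg_l (INR (S N))); auto. rewrite Rinv_r by lra.
    apply (Rmult_lt_reg_l (/ m)). apply Rinv_0_lt_compat; auto.
    replace (/ m * (INR (S N) * m)) with (INR (S N)) by (field; lra). lra. }
  assert (H1 : Rabs (f q - f t) < eps).
  { destruct (Req_dec q t) as [E|E].
    - rewrite E, Rminus_eq_0, Rabs_R0. auto.
    - apply (Hd' q). split. split; auto. exact I. simpl. unfold R_dist.
      pose proof (Rmin_l d (eps / (Rabs (f 1) + 1))) as Hml. fold m in Hml. lra. }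
  unfold q in H1. rewrite cauchy_rat in H1; auto. fold q in H1.
  assert (H2 : Rabs (q * f 1 - t * f 1) < eps).
  { replace (q * f 1 - t * f 1) with ((q - t) * f 1) by ring. rewrite Rabs_mult.
    pose proof (Rmin_r d (eps / (Rabs (f 1) + 1))) as Hmr. fold m in Hmr.
    pose proof (Rabs_pos (f 1)).
    assert (Rabs (q - t) < eps / (Rabs (f 1) + 1)) by lra.
    apply (Rle_lt_trans _ (eps / (Rabs (f 1) + 1) * Rabs (f 1))).
    + apply Rmult_le_compat_r; auto; lra.
    + apply (Rmult_lt_reg_r (Rabs (f 1) + 1)). lra.
      replace (eps / (Rabs (f 1) + 1) * Rabs (f 1) * (Rabs (f 1) + 1)) with (eps * Rabs (f 1)) by (field; lra).
      nra. }
  assert (Rabs (f t - t * f 1) <= Rabs (q * f 1 - f t) + Rabs (q * f 1 - t * f 1)).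
  { replace (f t - t * f 1) with (- (q * f 1 - f t) + (q * f 1 - t * f 1)) by ring.
    eapply Rle_trans. apply Rabs_triang. rewrite Rabs_Ropp. lra. }
  unfold eps in H1, H2. lra.
Qed.

Lemma pow2_ge_nat k : INR k <= 2 ^ k.
Proof.
  induction k. simpl. lra. rewrite S_INR. simpl.
  assert (1 <= 2 ^ k). { clear IHk. induction k; simpl; lra. }
  lra.
Qed.

Lemma nat_above x : exists k : nat, x <= INR k.
Proof.
  destruct (archimed x) as [H1 _].
  destruct (Z_lt_le_dec (up x) 0).
  - exists 0%nat. simpl. apply IZR_lt in l. lra.
  - exists (Z.to_nat (up x)). rewrite INR_IZR_INZ, Z2Nat.id by auto. lra.
Qed.


Lemma circle_surj (co si : R -> R) :
  (forall s t, co (s + t) = co s * co t - si s * si t) ->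
  (forall s t, si (s + t) = si s * co t + co s * si t) ->
  (forall t, co t * co t + si t * si t = 1) ->
  co 0 = 1 -> si 0 = 0 ->
  (forall t, continuity_pt co t) ->
  (exists t0, co t0 <> 1) ->
  forall c s, c * c + s * s = 1 -> exists t, co t = c /\ si t = s.
Proof.
  intros Hc Hs Hcirc Hc0 Hs0 Hcont [t0 Ht0] c0 s0 Hcs.
  assert (Hneg : forall t, co (- t) = co t /\ si (- t) = - si t).
  { intros t. pose proof (Hc t (- t)) as E1. pose proof (Hs t (- t)) as E2.
    rewrite Rplus_opp_r, Hc0 in E1. rewrite Rplus_opp_r, Hs0 in E2.
    pose proof (Hcirc t).
    split.
    - replace (co (- t)) with (co (-t) * (co t * co t + si t * si t)) by (rewrite H; ring).
      replace (co t) with (co t * 1) at 3 by ring. rewrite E1. 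
      replace (co (- t) * (co t * co t + si t * si t)) with
        (co t * (co t * co (- t) - si t * si (- t)) + si t * (si t * co (- t) + co t * si (- t))) by ring.
      rewrite <- E2. ring.
    - replace (si (- t)) with (si (-t) * (co t * co t + si t * si t)) by (rewrite H; ring).
      replace (si (- t) * (co t * co t + si t * si t)) with
        (co t * (si t * co (- t) + co t * si (- t)) - si t * (co t * co (- t) - si t * si (- t))) by ring.
      rewrite <- E1, <- E2. ring. }
  assert (Hdbl : forall t, co (t + t) = 2 * co t * co t - 1).
  { intros t. rewrite Hc. pose proof (Hcirc t). lra. }
  assert (Hle1 : forall t, co t <= 1).
  { intros t. pose proof (Hcirc t). nra. }
  assert (Ha : exists t1, co t1 <= 0).
  { apply NNPP. intros Hno.
    assert (Hpos : forall t, 0 < co t).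
    { intros t. apply Rnot_le_lt. intros Hle. apply Hno. exists t. auto. }
    set (a0 := co t0).
    assert (Ha0 : a0 < 1) by (pose proof (Hle1 t0); unfold a0; lra).
    assert (Hk : forall k, 2 ^ k * (1 - a0) <= 1 - co (t0 * 2 ^ k)).
    { induction k.
      - simpl. rewrite Rmult_1_r. unfold a0. lra.
      - replace (t0 * 2 ^ S k) with (t0 * 2 ^ k + t0 * 2 ^ k) by (simpl; ring).
        rewrite Hdbl. simpl.
        pose proof (Hpos (t0 * 2 ^ k)). pose proof (Hle1 (t0 * 2 ^ k)). nra. }
    destruct (nat_above (/ (1 - a0))) as [k Hk'].
    pose proof (pow2_ge_nat k).
    pose proof (Hk k). pose proof (Hpos (t0 * 2 ^ k)).
    assert (2 ^ k * (1 - a0) < 1) by lra.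
    assert (/ (1 - a0) * (1 - a0) = 1) by (field; lra).
    assert (INR k * (1 - a0) < 1) by nra.
    nra. }
  assert (Hb : exists t2, 0 <= t2 /\ co t2 = -1).
  { destruct Ha as [t1 Ht1].
    assert (Ht1' : exists t1', 0 <= t1' /\ co t1' <= 0).
    { destruct (Rle_dec 0 t1). exists t1; auto. exists (- t1). split. lra.
      rewrite (proj1 (Hneg t1)). auto. }
    destruct Ht1' as [t1' [Hp Hq]].
    destruct (IVT_cor co 0 t1' Hcont Hp) as [z [Hz1 Hz2]].
    { rewrite Hc0. lra. }
    exists (z + z). split. lra. rewrite Hdbl, Hz2. ring. }
  destruct Hb as [t2 [Ht2 Hct2]].
  assert (Hc01 : -1 <= c0 <= 1) by nra.
  destruct (IVT_cor (fun t => co t - c0) 0 t2) as [z [Hz1 Hz2]]; auto.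
  { intros x. apply continuity_pt_minus. apply Hcont. apply continuity_pt_const. intros a b; auto. }
  { rewrite Hc0, Hct2. nra. }
  assert (Hcz : co z = c0) by lra.
  assert (Hsz : (si z - s0) * (si z + s0) = 0).
  { pose proof (Hcirc z). rewrite Hcz in H. nra. }
  apply Rmult_integral in Hsz. destruct Hsz.
  - exists z. split; auto. lra.
  - exists (- z). destruct (Hneg z) as [E1 E2]. rewrite E1, E2. split; auto. lra.
Qed.

Lemma hom_eqs (phi : R -> isom2) :
  (forall p, act (phi 0) p = p) ->
  (forall s t p, act (phi (s + t)) p = act (phi s) (act (phi t) p)) ->
  (Q11 (phi 0) = 1 /\ Q12 (phi 0) = 0 /\ Q21 (phi 0) = 0 /\ Q22 (phi 0) = 1 /\
   T1 (phi 0) = 0 /\ T2 (phi 0) = 0) /\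
  (forall s t,
   Q11 (phi (s + t)) = Q11 (phi s) * Q11 (phi t) + Q12 (phi s) * Q21 (phi t) /\
   Q21 (phi (s + t)) = Q21 (phi s) * Q11 (phi t) + Q22 (phi s) * Q21 (phi t) /\
   Q12 (phi (s + t)) = Q11 (phi s) * Q12 (phi t) + Q12 (phi s) * Q22 (phi t) /\
   Q22 (phi (s + t)) = Q21 (phi s) * Q12 (phi t) + Q22 (phi s) * Q22 (phi t) /\
   T1 (phi (s + t)) = Q11 (phi s) * T1 (phi t) + Q12 (phi s) * T2 (phi t) + T1 (phi s) /\
   T2 (phi (s + t)) = Q21 (phi s) * T1 (phi t) + Q22 (phi s) * T2 (phi t) + T2 (phi s)).
Proof.
  intros Hid Hhom. split.
  - pose proof (f_equal fst (Hid (0,0))) as A1. pose proof (f_equal snd (Hid (0,0))) as A2.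
    pose proof (f_equal fst (Hid (1,0))) as B1. pose proof (f_equal snd (Hid (1,0))) as B2.
    pose proof (f_equal fst (Hid (0,1))) as C1. pose proof (f_equal snd (Hid (0,1))) as C2.
    unfold act in *; simpl in *. repeat split; lra.
  - intros s t.
    pose proof (f_equal fst (Hhom s t (0,0))) as A1. pose proof (f_equal snd (Hhom s t (0,0))) as A2.
    pose proof (f_equal fst (Hhom s t (1,0))) as B1. pose proof (f_equal snd (Hhom s t (1,0))) as B2.
    pose proof (f_equal fst (Hhom s t (0,1))) as C1. pose proof (f_equal snd (Hhom s t (0,1))) as C2.
    unfold act in *; simpl in *. repeat split; lra.
Qed.

Lemma rot_form (phi : R -> isom2) :
  (forall t, orthogonal2 (phi t)) ->
  (forall p, act (phi 0) p = p) ->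
  (forall s t p, act (phi (s + t)) p = act (phi s) (act (phi t) p)) ->
  forall t, Q12 (phi t) = - Q21 (phi t) /\ Q22 (phi t) = Q11 (phi t).
Proof.
  intros Horth Hid Hhom t.
  destruct (hom_eqs phi Hid Hhom) as [_ H].
  destruct (H (t/2) (t/2)) as [E1 [E2 [E3 [E4 _]]]].
  replace (t / 2 + t / 2) with t in * by field.
  set (a := Q11 (phi (t/2))) in *. set (b := Q12 (phi (t/2))) in *.
  set (c := Q21 (phi (t/2))) in *. set (d := Q22 (phi (t/2))) in *.
  destruct (Horth t) as [O1 [O2 O3]].
  set (A := Q11 (phi t)) in *. set (B := Q12 (phi t)) in *.
  set (C := Q21 (phi t)) in *. set (D := Q22 (phi t)) in *.
  assert (Hdet : A * D - B * C = (a * d - b * c) ^ 2).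
  { rewrite E1, E2, E3, E4. ring. }
  assert (Hdet2 : (A * D - B * C) ^ 2 = 1).
  { replace ((A * D - B * C) ^ 2) with ((A * A + C * C) * (B * B + D * D) - (A * B + C * D) ^ 2) by ring.
    rewrite O1, O2, O3. ring. }
  assert (Hpos : 0 <= A * D - B * C) by (rewrite Hdet; apply pow2_ge_0).
  assert (H1 : A * D - B * C = 1).
  { set (X := A * D - B * C) in *. assert ((X - 1) * (X + 1) = 0) by (simpl in Hdet2; nra).
    apply Rmult_integral in H0. destruct H0; lra. }
  assert (H2 : (B + C) ^ 2 + (D - A) ^ 2 = 0).
  { replace ((B + C) ^ 2 + (D - A) ^ 2) with ((A * A + C * C) + (B * B + D * D) - 2 * (A * D - B * C)) by ring.
    rewrite O1, O2, H1. ring. }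
  assert (0 <= (B + C) ^ 2) by apply pow2_ge_0.
  assert (0 <= (D - A) ^ 2) by apply pow2_ge_0.
  assert ((B + C) ^ 2 = 0) by lra. assert ((D - A) ^ 2 = 0) by lra.
  simpl in *. split; nra.
Qed.

Definition TransInv (V : R * R -> R * R) := exists e1 e2, e1 * e1 + e2 * e2 = 1 /\
  forall tau x y, V (x + tau * e1, y + tau * e2) = V (x, y).

Definition RotInv (V : R * R -> R * R) := exists c1 c2, forall co si, co * co + si * si = 1 ->
  forall x y, V (c1 + (co * x - si * y), c2 + (si * x + co * y)) =
    (co * fst (V (c1 + x, c2 + y)) - si * snd (V (c1 + x, c2 + y)),
     si * fst (V (c1 + x, c2 + y)) + co * snd (V (c1 + x, c2 + y))).

Lemma classify (V : R * R -> R * R) (phi : R -> isom2) :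
  one_param_group phi -> (forall t, invariant_under (phi t) V) -> TransInv V \/ RotInv V.
Proof.
  intros [Horth [Hid [Hhom [Hcont Hnt]]]] Hinv.
  destruct (hom_eqs phi Hid Hhom) as [[H0a [H0b [H0c [H0d [H0u H0v]]]]] Hh].
  pose proof (rot_form phi Horth Hid Hhom) as Hrf.
  set (co := fun t => Q11 (phi t)). set (si := fun t => Q21 (phi t)).
  set (u := fun t => T1 (phi t)). set (v := fun t => T2 (phi t)).
  assert (Hcadd : forall s t, co (s + t) = co s * co t - si s * si t).
  { intros s t. unfold co, si. destruct (Hh s t) as [E _]. rewrite E. rewrite (proj1 (Hrf s)). ring. }
  assert (Hsadd : forall s t, si (s + t) = si s * co t + co s * si t).
  { intros s t. unfold co, si. destruct (Hh s t) as [_ [E _]]. rewrite E. rewrite (proj2 (Hrf s)). ring. }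
  assert (Hcirc : forall t, co t * co t + si t * si t = 1).
  { intros t. destruct (Horth t) as [O _]. exact O. }
  assert (Hu : forall s t, u (s + t) = co s * u t - si s * v t + u s).
  { intros s t. unfold u, v, co, si. destruct (Hh s t) as [_ [_ [_ [_ [E _]]]]]. rewrite E.
    rewrite (proj1 (Hrf s)). ring. }
  assert (Hv : forall s t, v (s + t) = si s * u t + co s * v t + v s).
  { intros s t. unfold u, v, co, si. destruct (Hh s t) as [_ [_ [_ [_ [_ E]]]]]. rewrite E.
    rewrite (proj2 (Hrf s)). ring. }
  assert (Hinv' : forall t x y, V (co t * x - si t * y + u t, si t * x + co t * y + v t) =
     (co t * fst (V (x, y)) - si t * snd (V (x, y)), si t * fst (V (x, y)) + co t * snd (V (x, y)))).
  { intros t x y. pose proof (Hinv t (x, y)) as H. unfold act, lin in H. simpl in H.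
    destruct (Hrf t) as [E1 E2]. rewrite E1, E2 in H. unfold co, si, u, v.
    replace (Q11 (phi t) * x - Q21 (phi t) * y + T1 (phi t)) with (Q11 (phi t) * x + - Q21 (phi t) * y + T1 (phi t)) by ring.
    rewrite H. f_equal. ring. }
  assert (Hact : forall t x y, act (phi t) (x, y) = (co t * x - si t * y + u t, si t * x + co t * y + v t)).
  { intros t x y. unfold act. simpl. destruct (Hrf t) as [E1 E2]. rewrite E1, E2. unfold co, si, u, v. f_equal; ring. }
  destruct (classic (forall t, co t = 1)) as [Hall | Hex].
  -
    left.
    assert (Hsi : forall t, si t = 0). { intros t. pose proof (Hcirc t). rewrite Hall in H. nra. }
    assert (Hua : forall s t, u (s + t) = u s + u t).
    { intros s t. rewrite Hu, Hall, Hsi. ring. }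
    assert (Hva : forall s t, v (s + t) = v s + v t).
    { intros s t. rewrite Hv, Hall, Hsi. ring. }
    assert (HuL : forall t, u t = t * u 1).
    { apply cauchy_cont; auto. intros t. apply (Hcont t). }
    assert (HvL : forall t, v t = t * v 1).
    { apply cauchy_cont; auto. intros t. apply (Hcont t). }
    assert (Hw : u 1 * u 1 + v 1 * v 1 > 0).
    { destruct Hnt as [t [[x y] Hne]]. rewrite Hact, Hall, Hsi in Hne.
      rewrite HuL, HvL in Hne.
      destruct (Req_dec (u 1) 0) as [Eu|Eu]; [destruct (Req_dec (v 1) 0) as [Ev|Ev]|].
      - exfalso. apply Hne. rewrite Eu, Ev. f_equal; ring.
      - nra.
      - nra. }
    set (L := sqrt (u 1 * u 1 + v 1 * v 1)).
    assert (HL : 0 < L) by (apply sqrt_lt_R0; lra).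
    assert (HL2 : L * L = u 1 * u 1 + v 1 * v 1) by (apply sqrt_sqrt; lra).
    exists (u 1 / L), (v 1 / L). split.
    + replace (u 1 / L * (u 1 / L) + v 1 / L * (v 1 / L)) with ((u 1 * u 1 + v 1 * v 1) / (L * L)) by (field; lra). rewrite <- HL2. field. lra.
    + intros tau x y. pose proof (Hinv' (tau / L) x y) as H.
      rewrite Hall, Hsi, HuL, HvL in H.
      replace (x + tau * (u 1 / L)) with (1 * x - 0 * y + tau / L * u 1) by (field; lra).
      replace (y + tau * (v 1 / L)) with (0 * x + 1 * y + tau / L * v 1) by (field; lra).
      rewrite H. destruct (V (x, y)) as [p q]. simpl. f_equal; ring.
  -
    right.
    apply not_all_ex_not in Hex. destruct Hex as [t0 Ht0].
    set (a := co t0) in *. set (s := si t0) in *. set (u0 := u t0). set (v0 := v t0).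
    assert (Hle : a <= 1) by (pose proof (Hcirc t0); fold a s in H; nra).
    set (D := (1 - a) * (1 - a) + s * s).
    assert (HD : 0 < D) by (unfold D; assert (0 < 1 - a) by lra; nra).
    set (c1 := ((1 - a) * u0 - s * v0) / D).
    set (c2 := (s * u0 + (1 - a) * v0) / D).
    assert (Hfix : forall p1 p2, act (phi t0) (p1, p2) = (p1, p2) <-> p1 = c1 /\ p2 = c2).
    { intros p1 p2. rewrite Hact. fold a s u0 v0. split.
      - intros E. injection E. intros E2 E1.
        assert (G1 : (1 - a) * p1 + s * p2 = u0) by lra.
        assert (G2 : - s * p1 + (1 - a) * p2 = v0) by lra.
        split.
        + unfold c1. apply (Rmult_eq_reg_r D); [|lra]. unfold Rdiv. rewrite Rmult_assoc, Rinv_l by lra.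
          rewrite Rmult_1_r. rewrite <- G1, <- G2. unfold D. ring.
        + unfold c2. apply (Rmult_eq_reg_r D); [|lra]. unfold Rdiv. rewrite Rmult_assoc, Rinv_l by lra.
          rewrite Rmult_1_r. rewrite <- G1, <- G2. unfold D. ring.
      - intros [E1 E2]. subst p1 p2. unfold D in HD. f_equal; unfold c1, c2, D; field; lra. }
    assert (Hfixall : forall t, act (phi t) (c1, c2) = (c1, c2)).
    { intros t. destruct (act (phi t) (c1, c2)) as [p1 p2] eqn:Ep.
      assert (act (phi t0) (p1, p2) = (p1, p2)).
      { rewrite <- Ep. rewrite <- Hhom. rewrite Rplus_comm. rewrite Hhom.
        rewrite (proj2 (Hfix c1 c2) (conj eq_refl eq_refl)). auto. }
      apply Hfix in H. destruct H; subst; auto. }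
    assert (Hsurj := circle_surj co si Hcadd Hsadd Hcirc H0a H0c (fun t => proj1 (Hcont t)) (ex_intro (fun t => co t <> 1) t0 Ht0)).
    exists c1, c2. intros co' si' Hcs x y.
    destruct (Hsurj co' si' Hcs) as [t [Et1 Et2]].
    pose proof (Hfixall t) as Hf. rewrite Hact in Hf. injection Hf. intros F2 F1.
    pose proof (Hinv' t (c1 + x) (c2 + y)) as H.
    rewrite Et1, Et2 in *.
    replace (c1 + (co' * x - si' * y)) with (co' * (c1 + x) - si' * (c2 + y) + u t) by lra.
    replace (c2 + (si' * x + co' * y)) with (si' * (c1 + x) + co' * (c2 + y) + v t) by lra.
    exact H.
Qed.

Lemma ode_zero (al : R -> R) : smooth1 al ->
  (forall r, 0 < r -> Derive al r + al r / r = 0) -> forall r, 0 < r -> al r = 0.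
Proof.
  intros Hs Hode r Hr.
  set (k := fun x => x * al x).
  assert (Hk : forall x, 0 < x -> is_derive k x 0).
  { intros x Hx. pose proof (isd_mult (fun y => y) al x _ _ (isd_id x)
      (Derive_correct _ _ (smooth1_ex al x Hs))) as H.
    eapply isd_ext; [intros; reflexivity| | exact H].
    pose proof (Hode x Hx). apply (Rmult_eq_reg_r (/ x)). 2: apply Rinv_neq_0_compat; lra.
    rewrite Rmult_0_l. rewrite <- H0. field. lra. }
  assert (Hkc : forall x, continuity_pt k x).
  { intros x. apply smooth1_cont_pt. apply smooth1_mult. apply smooth1_id. auto. }
  assert (Hconst : forall e, 0 < e < r -> k r = k e).
  { intros e He. destruct (MVT_gen k e r (fun _ => 0)) as [xi [_ Hxi]].
    - intros x Hx. rewrite Rmin_left, Rmax_right in Hx by lra. apply Hk. lra.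
    - intros x Hx. apply Hkc.
    - lra. }
  assert (Hk0 : k 0 = 0) by (unfold k; ring).
  assert (Hkr : k r = 0).
  { apply NNPP. intros Hne.
    destruct (Hkc 0 (Rabs (k r)) (Rabs_pos_lt _ Hne)) as [d [Hd Hd']].
    set (e := Rmin (d / 2) (r / 2)).
    assert (He : 0 < e) by (apply Rmin_pos; lra).
    assert (He2 : e < r) by (pose proof (Rmin_r (d/2) (r/2)); unfold e; lra).
    assert (He3 : e < d) by (pose proof (Rmin_l (d/2) (r/2)); unfold e; lra).
    specialize (Hd' e). simpl in Hd'. unfold R_dist in Hd'.
    rewrite Hk0, Rminus_0_r, Rminus_0_r in Hd'.
    rewrite <- (Hconst e) in Hd' by lra.
    assert (Rabs (k r) < Rabs (k r)).
    { apply Hd'. split. split; [exact I| lra]. rewrite Rabs_right; lra. }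
    lra. }
  unfold k in Hkr. apply Rmult_integral in Hkr. destruct Hkr; lra.
Qed.

Lemma Derive_shift (f : R -> R) (b x : R) : ex_derive f (x + b) ->
  Derive (fun t => f (t + b)) x = Derive f (x + b).
Proof.
  intros H. rewrite (Derive_ext _ (fun t => f (1 * t + b))) by (intros; f_equal; ring).
  rewrite Derive_comp_affine. replace (1 * x + b) with (x + b) by ring. ring.
  replace (1 * x + b) with (x + b) by ring. auto.
Qed.

Lemma rot_case (B : vfield3) :
  smooth_vf3 B -> stationary B -> planar B -> RotInv (planar_part B) ->
  exists g : isom2, orthogonal2 g /\
    exists W : R * R -> R * R,
      pushforward_eq g (planar_part B) W /\
      (form_shear W \/ form_affine W \/ form_rotational W).
Proof.
  intros [Sx [Sy Sz]] [Hdiv _] [Hz Hxy] [c1 [c2 HR]].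
  set (U1 := fun x y => Vx B (c1 + x) (c2 + y) 0).
  set (U2 := fun x y => Vy B (c1 + x) (c2 + y) 0).
  assert (HR' : forall co si, co * co + si * si = 1 -> forall x y,
    U1 (co * x - si * y) (si * x + co * y) = co * U1 x y - si * U2 x y /\
    U2 (co * x - si * y) (si * x + co * y) = si * U1 x y + co * U2 x y).
  { intros co si Hcs x y. pose proof (HR co si Hcs x y) as H.
    unfold planar_part in H. simpl in H. injection H. intros E2 E1. unfold U1, U2. auto. }
  set (al := fun x => Vx B (1 * x + c1) c2 0).
  set (be := fun x => Vy B (1 * x + c1) c2 0).
  assert (Hal : forall x, U1 x 0 = al x) by (intros; unfold U1, al; f_equal; ring).
  assert (Hbe : forall x, U2 x 0 = be x) by (intros; unfold U2, be; f_equal; ring).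
  assert (Sal : smooth1 al) by (apply (smooth1_comp_affine 1 c1 (fun t => Vx B t c2 0)); apply smooth1_line_x; auto).
  assert (Sbe : smooth1 be) by (apply (smooth1_comp_affine 1 c1 (fun t => Vy B t c2 0)); apply smooth1_line_x; auto).
  assert (Hodd : forall x, al (- x) = - al x /\ be (- x) = - be x).
  { intros x. destruct (HR' (-1) 0 ltac:(ring) x 0) as [E1 E2].
    replace (-1 * x - 0 * 0) with (- x) in E1, E2 by ring.
    replace (0 * x + -1 * 0) with 0 in E1, E2 by ring.
    rewrite !Hal, !Hbe in *. split; lra. }
  assert (Hpolar : forall x y, 0 < x * x + y * y ->
    U1 x y = (x * al (sqrt (x * x + y * y)) - y * be (sqrt (x * x + y * y))) / sqrt (x * x + y * y) /\
    U2 x y = (y * al (sqrt (x * x + y * y)) + x * be (sqrt (x * x + y * y))) / sqrt (x * x + y * y)).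
  { intros x y Hxy0. set (rho := sqrt (x * x + y * y)).
    assert (Hr : 0 < rho) by (apply sqrt_lt_R0; auto).
    assert (Hr2 : rho * rho = x * x + y * y) by (apply sqrt_sqrt; lra).
    destruct (HR' (x / rho) (y / rho)) with (x := rho) (y := 0) as [E1 E2].
    { replace (x / rho * (x / rho) + y / rho * (y / rho)) with ((x * x + y * y) / (rho * rho)) by (field; lra).
      rewrite Hr2. field. lra. }
    replace (x / rho * rho - y / rho * 0) with x in E1, E2 by (field; lra).
    replace (y / rho * rho + x / rho * 0) with y in E1, E2 by (field; lra).
    rewrite Hal, Hbe in E1, E2. rewrite E1, E2. split; field; lra. }
  assert (HdU2 : forall r, 0 < r -> is_derive (U2 r) 0 (al r / r)).
  { intros r Hr.
    apply (isd_ext (fun t => (t * al (sqrt (r * r + t * t)) + r * be (sqrt (r * r + t * t))) / sqrt (r * r + t * t)) (U2 r) 0 (al r / r) (al r / r)).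
    - intros t. symmetry. apply (Hpolar r t). nra.
    - reflexivity.
    - auto_derive.
      + replace (r * r + 0 * 0) with (r * r) by ring. rewrite sqrt_square by lra.
        repeat split; try (apply smooth1_ex; auto); nra.
      + replace (r * r + 0 * 0) with (r * r) by ring. rewrite sqrt_square by lra. field. lra. }
  assert (Hode : forall r, 0 < r -> Derive al r + al r / r = 0).
  { intros r Hr. pose proof (Hdiv (c1 + r) c2 0) as H. unfold divergence, pd3 in H.
    assert (E1 : Derive (fun t => Vx B t c2 0) (c1 + r) = Derive al r).
    { unfold al. symmetry. etransitivity.
      - apply (Derive_comp_affine (fun t => Vx B t c2 0) 1 c1 r).
        apply smooth1_ex. apply smooth1_line_x; auto.
      - replace (1 * r + c1) with (c1 + r) by ring. apply Rmult_1_l. }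
    assert (E2 : Derive (fun t => Vy B (c1 + r) t 0) c2 = al r / r).
    { rewrite (Derive_ext _ (fun t => U2 r (t + - c2))) by (intros; unfold U2; f_equal; ring).
      rewrite Derive_shift. replace (c2 + - c2) with 0 by ring. apply isd_unique. apply HdU2; auto.
      replace (c2 + - c2) with 0 by ring. exact (isd_ex _ _ _ (HdU2 r Hr)). }
    assert (E3 : Derive (fun t => Vz B (c1 + r) c2 t) 0 = 0).
    { rewrite (Derive_ext _ (fun _ => 0)) by (intros; apply Hz). apply Derive_const. }
    rewrite E1, E2, E3 in H. lra. }
  assert (Hal0 := ode_zero al Sal Hode).
  destruct (whitney_odd be Sbe (fun x => proj2 (Hodd x))) as [G [SG HG]].
  exists (mkIsom2 1 0 0 1 (- c1) (- c2)). split.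
  { unfold orthogonal2. simpl. repeat split; ring. }
  exists (fun q => planar_part B (fst q + c1, snd q + c2)). split.
  { intros [p1 p2]. unfold act, lin, planar_part. simpl.
    replace (1 * p1 + 0 * p2 + - c1 + c1) with p1 by ring.
    replace (0 * p1 + 1 * p2 + - c2 + c2) with p2 by ring. f_equal; ring. }
  right. right. exists G. split; auto.
  intros x y. unfold planar_part. simpl.
  change (Vx B (x + c1) (y + c2) 0) with (Vx B (x + c1) (y + c2) 0).
  replace (Vx B (x + c1) (y + c2) 0) with (U1 x y) by (unfold U1; f_equal; ring).
  replace (Vy B (x + c1) (y + c2) 0) with (U2 x y) by (unfold U2; f_equal; ring).
  destruct (Req_dec (x * x + y * y) 0) as [H0|H0].
  - assert (x = 0) by nra. assert (y = 0) by nra. subst.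
    rewrite Hal, Hbe.
    assert (al 0 = 0). { destruct (Hodd 0) as [E _]. rewrite Ropp_0 in E. lra. }
    assert (be 0 = 0). { destruct (Hodd 0) as [_ E]. rewrite Ropp_0 in E. lra. }
    rewrite H, H1. f_equal; ring.
  - assert (Hp : 0 < x * x + y * y) by nra.
    destruct (Hpolar x y Hp) as [E1 E2]. rewrite E1, E2.
    set (rho := sqrt (x * x + y * y)) in *.
    assert (Hr : 0 < rho) by (apply sqrt_lt_R0; auto).
    assert (Hr2 : rho * rho = x * x + y * y) by (apply sqrt_sqrt; lra).
    rewrite (Hal0 rho Hr). rewrite (HG rho).
    replace (rho ^ 2) with (x ^ 2 + y ^ 2) by (simpl; nra).
    replace (x * (x * 1) + y * (y * 1)) with (x ^ 2 + y ^ 2) by ring. f_equal; field; lra.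
Qed.

Lemma isd_cont (f : R -> R) x a : is_derive f x a -> continuity_pt f x.
Proof.
  intros H. apply continuity_pt_filterlim.
  exact (ex_derive_continuous (K:=R_AbsRing) (V:=R_NormedModule) f x (isd_ex _ _ _ H)).
Qed.

Lemma zero_deriv_const (f : R -> R) : (forall t, is_derive f t 0) -> forall x y, f x = f y.
Proof.
  intros H x y. destruct (MVT_gen f x y (fun _ => 0)) as [c [_ Hc]].
  - intros; apply H.
  - intros; eapply isd_cont; apply H.
  - lra.
Qed.

Lemma const_deriv_affine (f : R -> R) k : (forall t, is_derive f t k) -> forall t, f t = k * t + f 0.
Proof.
  intros H t. pose proof (zero_deriv_const (fun t => f t - k * t)) as Z.
  assert (forall t, is_derive (fun t => f t - k * t) t 0).
  { intros s. pose proof (isd_plus f (fun t => (-k) * t) s _ _ (H s) (isd_scal _ (-k) s _ (isd_id s))) as H2.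
    eapply isd_ext; [ | | exact H2]. intros; cbv beta; ring. ring. }
  specialize (Z H0 t 0). simpl in Z. lra.
Qed.

Lemma pressure_lemma (p2 : R -> R -> R) (P1 P2 : R -> R) n1 n2 : n1 <> 0 ->
  (forall s, continuity_pt P1 s) ->
  (forall x y, is_derive (fun t => p2 t y) x (P1 (n1 * x + n2 * y))) ->
  (forall x y, is_derive (fun t => p2 x t) y (P2 (n1 * x + n2 * y))) ->
  forall s, n1 * P2 s - n2 * P1 s = n1 * P2 0 - n2 * P1 0.
Proof.
  intros Hn1 HP1 Hx Hy s.
  set (Phi := fun b => RInt P1 0 b).
  assert (HPhi : forall b, is_derive Phi b (P1 b)).
  { intros b. apply (is_derive_RInt P1 Phi 0 b).
    - apply filter_forall. intros c. apply (RInt_correct (V:=R_CompleteNormedModule)).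
      apply exRInt_cont. intros z _. apply continuity_pt_filterlim. apply HP1.
    - apply continuity_pt_filterlim. apply HP1. }
  set (E := fun x y => p2 x y - Phi (n1 * x + n2 * y) / n1).
  assert (HEx : forall x y, is_derive (fun t => E t y) x 0).
  { intros x y.
    assert (H1 : is_derive (fun t => n1 * t + n2 * y) x n1) by (auto_derive; auto; ring).
    pose proof (isd_comp Phi (fun t => n1 * t + n2 * y) x _ _ (HPhi _) H1) as H2.
    pose proof (isd_plus _ _ x _ _ (Hx x y) (isd_scal _ (- / n1) x _ H2)) as H3.
    eapply isd_ext; [ | | exact H3]. intros; unfold E; cbv beta; field; auto. field; auto. }
  assert (HE0 : forall x y, E x y = E 0 y).
  { intros x y. apply (zero_deriv_const (fun t => E t y)). intros; apply HEx. }
  assert (HEy : forall x y, is_derive (fun t => E x t) y (P2 (n1 * x + n2 * y) - n2 / n1 * P1 (n1 * x + n2 * y))).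
  { intros x y.
    assert (H1 : is_derive (fun t => n1 * x + n2 * t) y n2) by (auto_derive; auto; ring).
    pose proof (isd_comp Phi (fun t => n1 * x + n2 * t) y _ _ (HPhi _) H1) as H2.
    pose proof (isd_plus _ _ y _ _ (Hy x y) (isd_scal _ (- / n1) y _ H2)) as H3.
    eapply isd_ext; [ | | exact H3]. intros; unfold E; cbv beta; field; auto. field; auto. }
  pose proof (HEy (s / n1) 0) as A1.
  pose proof (HEy 0 0) as A2.
  assert (A3 : is_derive (fun t => E (s / n1) t) 0 (P2 (n1 * 0 + n2 * 0) - n2 / n1 * P1 (n1 * 0 + n2 * 0))).
  { eapply isd_ext; [ | | exact A2]. intros t. symmetry. apply HE0. reflexivity. }
  pose proof (isd_unique _ _ _ A1) as U1. pose proof (isd_unique _ _ _ A3) as U2.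
  rewrite U1 in U2.
  replace (n1 * (s / n1) + n2 * 0) with s in U2 by (field; auto).
  replace (n1 * 0 + n2 * 0) with 0 in U2 by ring.
  apply (Rmult_eq_reg_r (/ n1)). 2: apply Rinv_neq_0_compat; auto.
  replace ((n1 * P2 s - n2 * P1 s) * / n1) with (P2 s - n2 / n1 * P1 s) by (field; auto).
  replace ((n1 * P2 0 - n2 * P1 0) * / n1) with (P2 0 - n2 / n1 * P1 0) by (field; auto).
  exact U2.
Qed.

Lemma trans_case (B : vfield3) :
  smooth_vf3 B -> stationary B -> planar B -> TransInv (planar_part B) ->
  exists g : isom2, orthogonal2 g /\
    exists W : R * R -> R * R,
      pushforward_eq g (planar_part B) W /\
      (form_shear W \/ form_affine W \/ form_rotational W).
Proof.
  intros [Sx [Sy Sz]] [Hdiv [p Hp]] [Hz Hxy] [e1 [e2 [He HT]]].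
  set (A1 := fun s => Vx B (- s * e2) (s * e1) 0).
  set (A2 := fun s => Vy B (- s * e2) (s * e1) 0).
  assert (HA : forall x y, Vx B x y 0 = A1 (- e2 * x + e1 * y) /\ Vy B x y 0 = A2 (- e2 * x + e1 * y)).
  { intros x y. set (s := - e2 * x + e1 * y). set (tau := e1 * x + e2 * y).
    pose proof (HT tau (- s * e2) (s * e1)) as H. unfold planar_part in H. simpl in H.
    assert (E1 : - s * e2 + tau * e1 = x).
    { transitivity (x * (e1 * e1 + e2 * e2)). unfold s, tau; ring. rewrite He; ring. }
    assert (E2 : s * e1 + tau * e2 = y).
    { transitivity (y * (e1 * e1 + e2 * e2)). unfold s, tau; ring. rewrite He; ring. }
    rewrite E1, E2 in H. injection H. intros F2 F1. unfold A1, A2. auto. }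
  assert (SA : smooth1 A1 /\ smooth1 A2).
  { destruct (Req_dec e2 0) as [H0|H0].
    - assert (He1 : e1 * e1 = 1) by (rewrite H0 in He; lra).
      split.
      + apply (smooth1_ext (fun s => Vx B 0 (e1 * s + 0) 0)).
        { intros s. rewrite (proj1 (HA 0 (e1 * s + 0))). f_equal.
          transitivity (s * (e1 * e1)). ring. rewrite He1. ring. }
        apply (smooth1_comp_affine e1 0 (fun t => Vx B 0 t 0)). apply smooth1_line_y; auto.
      + apply (smooth1_ext (fun s => Vy B 0 (e1 * s + 0) 0)).
        { intros s. rewrite (proj2 (HA 0 (e1 * s + 0))). f_equal.
          transitivity (s * (e1 * e1)). ring. rewrite He1. ring. }
        apply (smooth1_comp_affine e1 0 (fun t => Vy B 0 t 0)). apply smooth1_line_y; auto.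
    - split.
      + apply (smooth1_ext (fun s => Vx B ((- / e2) * s + 0) 0 0)).
        { intros s. rewrite (proj1 (HA _ 0)). f_equal. field. auto. }
        apply (smooth1_comp_affine (- / e2) 0 (fun t => Vx B t 0 0)). apply smooth1_line_x; auto.
      + apply (smooth1_ext (fun s => Vy B ((- / e2) * s + 0) 0 0)).
        { intros s. rewrite (proj2 (HA _ 0)). f_equal. field. auto. }
        apply (smooth1_comp_affine (- / e2) 0 (fun t => Vy B t 0 0)). apply smooth1_line_x; auto. }
  destruct SA as [SA1 SA2].
  assert (DX1 : forall x y, Derive (fun t => Vx B t y 0) x = - e2 * Derive A1 (- e2 * x + e1 * y)).
  { intros x y. rewrite (Derive_ext _ (fun t => A1 (- e2 * t + e1 * y))) by (intros; apply HA).
    rewrite Derive_comp_affine. auto. apply smooth1_ex; auto. }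
  assert (DX2 : forall x y, Derive (fun t => Vy B t y 0) x = - e2 * Derive A2 (- e2 * x + e1 * y)).
  { intros x y. rewrite (Derive_ext _ (fun t => A2 (- e2 * t + e1 * y))) by (intros; apply HA).
    rewrite Derive_comp_affine. auto. apply smooth1_ex; auto. }
  assert (DY1 : forall x y, Derive (fun t => Vx B x t 0) y = e1 * Derive A1 (- e2 * x + e1 * y)).
  { intros x y. rewrite (Derive_ext _ (fun t => A1 (e1 * t + - e2 * x))) by (intros; rewrite (proj1 (HA x t)); f_equal; ring).
    rewrite Derive_comp_affine. f_equal. f_equal. ring. apply smooth1_ex; auto. }
  assert (DY2 : forall x y, Derive (fun t => Vy B x t 0) y = e1 * Derive A2 (- e2 * x + e1 * y)).
  { intros x y. rewrite (Derive_ext _ (fun t => A2 (e1 * t + - e2 * x))) by (intros; rewrite (proj2 (HA x t)); f_equal; ring).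
    rewrite Derive_comp_affine. f_equal. f_equal. ring. apply smooth1_ex; auto. }
  assert (DZ : forall x y, Derive (fun t => Vz B x y t) 0 = 0).
  { intros x y. rewrite (Derive_ext _ (fun _ => 0)) by (intros; apply Hz). apply Derive_const. }
  set (a := fun s => e1 * A1 s + e2 * A2 s).
  set (b := fun s => - e2 * A1 s + e1 * A2 s).
  assert (Sa : smooth1 a) by (apply smooth1_plus; apply smooth1_scal; auto).
  set (a' := fun s => e1 * Derive A1 s + e2 * Derive A2 s).
  assert (Ha' : forall s, is_derive a s (a' s)).
  { intros s. apply isd_plus; apply isd_scal; apply Derive_correct; apply smooth1_ex; auto. }
  (* divergence: b is constant *)
  assert (Hb' : forall s, is_derive b s 0).
  { intros s. pose proof (Hdiv (- e2 * s) (e1 * s) 0) as H. unfold divergence, pd3 in H.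
    rewrite DX1, DY2, DZ in H.
    replace (- e2 * (- e2 * s) + e1 * (e1 * s)) with (s * (e1 * e1 + e2 * e2)) in H by ring.
    rewrite He, Rmult_1_r in H.
    pose proof (isd_plus _ _ s _ _ (isd_scal _ (- e2) s _ (Derive_correct _ _ (smooth1_ex A1 s SA1)))
                                   (isd_scal _ e1 s _ (Derive_correct _ _ (smooth1_ex A2 s SA2)))) as H2.
    eapply isd_ext; [ | | exact H2]. intros; reflexivity. lra. }
  assert (Hbc : forall s, b s = b 0) by (intros; apply (zero_deriv_const b Hb')).
  (* pressure: a' * b is constant *)
  set (P1 := fun s => a' s * A2 s).
  set (P2 := fun s => - a' s * A1 s).
  assert (Hpx : forall x y, is_derive (fun t => p t y 0) x (P1 (- e2 * x + e1 * y))).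
  { intros x y. destruct (Hp x y 0) as [H _]. simpl in H. unfold pd3 in H.
    rewrite DX2, DY1, Hz in H. rewrite (proj2 (HA x y)) in H.
    eapply isd_ext; [ | | exact H]. intros; reflexivity. unfold P1, a'. ring. }
  assert (Hpy : forall x y, is_derive (fun t => p x t 0) y (P2 (- e2 * x + e1 * y))).
  { intros x y. destruct (Hp x y 0) as [_ [H _]]. simpl in H. unfold pd3 in H.
    rewrite DX2, DY1, Hz in H. rewrite (proj1 (HA x y)) in H.
    eapply isd_ext; [ | | exact H]. intros; reflexivity. unfold P2, a'. ring. }
  assert (Ca' : forall s, continuity_pt a' s).
  { intros s. apply smooth1_cont_pt. apply smooth1_plus; apply smooth1_scal; apply smooth1_Derive; auto. }
  assert (HC : exists C, forall s, a' s * b s = C).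
  { destruct (Req_dec e2 0) as [H0|H0].
    - assert (He1 : e1 <> 0) by (intros E; rewrite E, H0 in He; lra).
      assert (PL : forall s, e1 * P1 s - - e2 * P2 s = e1 * P1 0 - - e2 * P2 0).
      { apply (pressure_lemma (fun x y => p y x 0) P2 P1 e1 (- e2) He1).
        + intros t. apply continuity_pt_mult. apply continuity_pt_opp. apply Ca'.
          apply smooth1_cont_pt; auto.
        + intros x y. eapply isd_ext; [ | | apply (Hpy y x)]. intros; reflexivity. f_equal. ring.
        + intros x y. eapply isd_ext; [ | | apply (Hpx y x)]. intros; reflexivity. f_equal. ring. }
      exists (e1 * P1 0 - - e2 * P2 0). intros s. rewrite <- (PL s). unfold P1, P2, b. ring.
    - assert (PL : forall s, - e2 * P2 s - e1 * P1 s = - e2 * P2 0 - e1 * P1 0).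
      { apply (pressure_lemma (fun x y => p x y 0) P1 P2 (- e2) e1 ltac:(lra)).
        + intros t. apply continuity_pt_mult. apply Ca'. apply smooth1_cont_pt; auto.
        + intros x y. apply Hpx.
        + intros x y. apply Hpy. }
      exists (- (- e2 * P2 0 - e1 * P1 0)). intros s. rewrite <- (PL s). unfold P1, P2, b. ring. }
  destruct HC as [C HC].
  exists (mkIsom2 e1 e2 (- e2) e1 0 0). split.
  { unfold orthogonal2. simpl. repeat split; nra. }
  exists (fun q => (a (snd q), b (snd q))). split.
  { intros [x y]. unfold act, lin, planar_part. simpl. rewrite (proj1 (HA x y)), (proj2 (HA x y)).
    replace (- e2 * x + e1 * y + 0) with (- e2 * x + e1 * y) by ring. unfold a, b. f_equal; ring. }
  destruct (Req_dec (b 0) 0) as [Hd0|Hd0].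
  - left. exists a. split; auto. intros x y. simpl. rewrite Hbc, Hd0. auto.
  - right. left. exists (C / b 0), (a 0), (b 0). intros x y. simpl. rewrite (Hbc y).
    f_equal. apply (const_deriv_affine a (C / b 0)).
    intros t. eapply isd_ext; [ | | apply (Ha' t)]. intros; reflexivity.
    rewrite <- (HC t), (Hbc t). field. auto.
Qed.

Theorem proposition1p2 (B : vfield3) :
  smooth_vf3 B ->
  stationary B ->
  planar B ->
  has_additional_symmetry (planar_part B) ->
  exists g : isom2, orthogonal2 g /\
    exists W : R * R -> R * R,
      pushforward_eq g (planar_part B) W /\
      (form_shear W \/ form_affine W \/ form_rotational W).
Proof.
  intros Hs Hst Hpl [phi [Hopg Hinv]].
  destruct (classify (planar_part B) phi Hopg Hinv) as [HT | HR].
  - apply trans_case; auto.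
  - apply rot_case; auto.
Qed.
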